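(* (a) Let $p,q>0$ and $a_k=e^{pk^q}$, $k\ge1$; then $\lim_{N\to\infty}E[U_j^N]=I(\alpha;j)<\infty$ for all $j\ge2$. (b) The same holds for $a_k=k!$, $k\ge1$. (c) For $p>0$ and the decaying sequence $b_k=e^{-pk}$, $k\ge1$, the limit $\lim_{N\to\infty}E[U_j^N]$ exists and is finite for all $j\ge2$, and equals $I(\alpha;j)$ with $\alpha=\{e^{pk}\}_{k\ge1}$.
   Context: For a positive sequence $\{c_k\}$ and $N\ge2$, coupon type $k\in\{1,\dots,N\}$ has probability $c_k/\sum_{i=1}^Nc_i$; $U_j^N$ is the number of empty album places of the $j$-th collector when the first collector completes her set (each collector passes duplicates to the next one), with $$E[U_j^N]=\sum_{k=1}^N\int_0^\infty c_k e^{-c_k t}\frac{(c_kt)^{j-1}}{(j-1)!}\prod_{i\ne k,\,1\le i\le N}\big(1-e^{-c_i t}\big)\,dt.$$ For a positive sequence $\alpha=\{a_k\}$: $x_\alpha:=\inf\{x\in[0,1]:\sum_k x^{a_k}=\infty\}$, $L(x;\alpha;j):=\sum_{k}a_k^j\frac{x^{a_k}}{1-x^{a_k}}$, $F(x;\alpha):=\prod_{k}(1-x^{a_k})$, $I(\alpha;j):=\frac{1}{(j-1)!}\int_0^{x_\alpha}L(x;\alpha;j)F(x;\alpha)|\ln x|^{j-1}\frac{dx}{x}$. *)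

(* Defs.v *)
From Stdlib Require Import Reals Lra Lia Arith Factorial Classical ClassicalEpsilon.
Open Scope R_scope.

(* x^y for real y with the convention 0^y = 0 (y > 0); x > 0 uses Rpower. *)
Definition rpow (x y : R) : R := if Rle_dec x 0 then 0 else Rpower x y.

Definition lim_seq (u : nat -> R) : R := epsilon (inhabits 0) (fun l => Un_cv u l).

Definition ImpIntInf (f : R -> R) (a l : R) : Prop :=
  (forall v, a <= v -> inhabited (Riemann_integrable f a v)) /\
  (forall eps, eps > 0 -> exists M, forall v (pr : Riemann_integrable f a v),
       M <= v -> a <= v -> Rabs (RiemannInt pr - l) < eps).

Definition ImpIntOpen (f : R -> R) (a b l : R) : Prop :=
  (forall u v, a < u -> u <= v -> v < b -> inhabited (Riemann_integrable f u v)) /\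
  (forall eps, eps > 0 -> exists d, d > 0 /\
     forall u v (pr : Riemann_integrable f u v),
       a < u -> u < a + d -> b - d < v -> v < b -> u <= v ->
       Rabs (RiemannInt pr - l) < eps).

Definition imp_int_inf (f : R -> R) (a : R) : R :=
  epsilon (inhabits 0) (fun l => ImpIntInf f a l).

(* Sequences are indexed by k >= 1: the value at k is c k (c 0 is unused). *)

(* integrand of the k-th summand of E[U_j^N]:
   c_k e^{-c_k t} (c_k t)^{j-1}/(j-1)! prod_{i<>k, 1<=i<=N} (1 - e^{-c_i t}) *)
Definition EU_integrand (c : nat -> R) (N j k : nat) (t : R) : R :=
  c k * exp (- (c k * t)) * (c k * t) ^ (j - 1) / INR (fact (j - 1)) *
  prod_f_R0 (fun i => if Nat.eqb (S i) k then 1 else 1 - exp (- (c (S i) * t)))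
            (N - 1).

Definition EU (c : nat -> R) (j N : nat) : R :=
  sum_f_R0 (fun k => imp_int_inf (EU_integrand c N j (S k)) 0) (N - 1).

Definition is_inf (S : R -> Prop) (m : R) : Prop :=
  (forall x, S x -> m <= x) /\ (forall m', (forall x, S x -> m' <= x) -> m' <= m).

Definition diverge_set (a : nat -> R) (x : R) : Prop :=
  0 <= x <= 1 /\
  forall M, exists n, sum_f_R0 (fun k => rpow x (a (S k))) n > M.

Definition xalpha (a : nat -> R) : R := epsilon (inhabits 0) (is_inf (diverge_set a)).

Definition Lfun (a : nat -> R) (j : nat) (x : R) : R :=
  lim_seq (fun n => sum_f_R0
    (fun k => (a (S k)) ^ j * rpow x (a (S k)) / (1 - rpow x (a (S k)))) n).

Definition Ffun (a : nat -> R) (x : R) : R :=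
  lim_seq (fun n => prod_f_R0 (fun k => 1 - rpow x (a (S k))) n).

Definition I_integrand (a : nat -> R) (j : nat) (x : R) : R :=
  / INR (fact (j - 1)) * (Lfun a j x * Ffun a x * (Rabs (ln x)) ^ (j - 1) / x).

(* "lim_{N->oo} E[U_j^N] = I(alpha;j) < oo" for coupon weights c and sequence a:
   every integral defining E[U_j^N] converges, the improper integral I(alpha;j)
   over (0, x_alpha) converges to a finite value l, and E[U_j^N] -> l. *)
Definition LimitIsI (c a : nat -> R) (j : nat) : Prop :=
  (forall N k, (2 <= N)%nat -> (1 <= k <= N)%nat ->
      exists v, ImpIntInf (EU_integrand c N j k) 0 v) /\
  exists l, ImpIntOpen (I_integrand a j) 0 (xalpha a) l /\
            Un_cv (fun N => EU c j N) l.

(* Main.v *)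
Require Import Defs.
From Stdlib Require Import Reals Factorial Lra Lia ClassicalEpsilon FunctionalExtensionality.
From Coquelicot Require Import Coquelicot.
Open Scope R_scope.

Lemma lim_seq_eq u l : Un_cv u l -> lim_seq u = l.
Proof.
  intros H. unfold lim_seq.
  assert (H2 := epsilon_spec (inhabits 0) (fun l => Un_cv u l) (ex_intro _ l H)).
  exact (UL_sequence _ _ _ H2 H).
Qed.

Lemma ImpIntInf_unique f a l1 l2 : ImpIntInf f a l1 -> ImpIntInf f a l2 -> l1 = l2.
Proof.
  intros [I1 H1] [_ H2].
  apply Rle_antisym; apply Rnot_lt_le; intro Hlt.
  - set (e := (l1 - l2)/2).
    destruct (H1 e ltac:(unfold e; lra)) as [M1 HM1].
    destruct (H2 e ltac:(unfold e; lra)) as [M2 HM2].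
    set (v := Rmax a (Rmax M1 M2)).
    destruct (I1 v ltac:(unfold v; apply Rmax_l)) as [pr].
    specialize (HM1 v pr ltac:(unfold v; eapply Rle_trans;[apply Rmax_l|apply Rmax_r]) ltac:(apply Rmax_l)).
    specialize (HM2 v pr ltac:(unfold v; eapply Rle_trans;[apply Rmax_r|apply Rmax_r]) ltac:(apply Rmax_l)).
    apply Rabs_def2 in HM1. apply Rabs_def2 in HM2. unfold e in *; lra.
  - set (e := (l2 - l1)/2).
    destruct (H1 e ltac:(unfold e; lra)) as [M1 HM1].
    destruct (H2 e ltac:(unfold e; lra)) as [M2 HM2].
    set (v := Rmax a (Rmax M1 M2)).
    destruct (I1 v ltac:(unfold v; apply Rmax_l)) as [pr].
    specialize (HM1 v pr ltac:(unfold v; eapply Rle_trans;[apply Rmax_l|apply Rmax_r]) ltac:(apply Rmax_l)).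
    specialize (HM2 v pr ltac:(unfold v; eapply Rle_trans;[apply Rmax_r|apply Rmax_r]) ltac:(apply Rmax_l)).
    apply Rabs_def2 in HM1. apply Rabs_def2 in HM2. unfold e in *; lra.
Qed.

Lemma imp_int_inf_eq f a l : ImpIntInf f a l -> imp_int_inf f a = l.
Proof.
  intros H. unfold imp_int_inf.
  assert (H2 := epsilon_spec (inhabits 0) (fun l => ImpIntInf f a l) (ex_intro _ l H)).
  exact (ImpIntInf_unique _ _ _ _ H2 H).
Qed.

Lemma ImpIntInf_of_RInt (f : R -> R) (l : R) :
  (forall t, 0 <= t -> continuous f t) ->
  (forall e, e > 0 -> exists M, forall v, M <= v -> 0 <= v -> Rabs (RInt f 0 v - l) < e) ->
  ImpIntInf f 0 l.
Proof.
  intros Hc Hl. split.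
  - intros v Hv. constructor. apply ex_RInt_Reals_0. apply (@ex_RInt_continuous R_CompleteNormedModule).
    intros z Hz. apply Hc. rewrite Rmin_left in Hz by lra. lra.
  - intros e He. destruct (Hl e He) as [M HM]. exists M. intros v pr H1 H2.
    rewrite <- RInt_Reals. now apply HM.
Qed.

Lemma ex_RInt_cont0 (f : R -> R) (u v : R) : (forall t, 0 <= t -> continuous f t) -> 0 <= u -> 0 <= v -> ex_RInt f u v.
Proof.
  intros Hc Hu Hv. apply (@ex_RInt_continuous R_CompleteNormedModule). intros z Hz. apply Hc.
  destruct (Rle_dec u v); [rewrite Rmin_left in Hz|rewrite Rmin_right in Hz]; lra.
Qed.

Lemma RInt_mono_upper (f : R -> R) (u v w : R) : (forall t, 0 <= t -> continuous f t) ->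
  (forall t, 0 <= t -> 0 <= f t) -> 0 <= u -> u <= v -> v <= w -> RInt f u v <= RInt f u w.
Proof.
  intros Hc Hp Hu Huv Hvw.
  rewrite <- (RInt_Chasles f u v w) by (apply ex_RInt_cont0; auto; lra).
  assert (0 <= RInt f v w). { apply RInt_ge_0; auto. apply ex_RInt_cont0; auto; lra.
    intros; apply Hp; lra. }
  simpl. unfold plus; simpl. lra.
Qed.

Lemma imp_inf_bounded (f : R -> R) (B : R) :
  (forall t, 0 <= t -> continuous f t) -> (forall t, 0 <= t -> 0 <= f t) ->
  (forall V, 0 <= V -> RInt f 0 V <= B) ->
  exists l, ImpIntInf f 0 l /\ (forall V, 0 <= V -> RInt f 0 V <= l) /\ l <= B /\
   (forall e, e > 0 -> exists M, 0 <= M /\ forall v, M <= v -> Rabs (RInt f 0 v - l) < e).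
Proof.
  intros Hc Hp HB.
  set (E := fun x => exists V, 0 <= V /\ x = RInt f 0 V).
  destruct (completeness E) as [l [Hub Hlub]].
  { exists B. intros x [V [HV ->]]. now apply HB. }
  { exists (RInt f 0 0). exists 0. split; lra. }
  assert (Hconv : forall e, e > 0 -> exists M, 0 <= M /\ forall v, M <= v -> Rabs (RInt f 0 v - l) < e).
  { intros e He.
    destruct (Classical_Prop.classic (exists V, 0 <= V /\ RInt f 0 V > l - e)) as [[V [HV HVl]]|Hn].
    - exists V. split; auto. intros v Hv.
      assert (RInt f 0 V <= RInt f 0 v) by (apply RInt_mono_upper; auto; lra).
      assert (RInt f 0 v <= l) by (apply Hub; exists v; split; auto; lra).
      apply Rabs_def1; lra.
    - exfalso. assert (l <= l - e). { apply Hlub. intros x [V [HV ->]].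
        apply Rnot_lt_le. intro. apply Hn. exists V. split; auto; lra. } lra. }
  exists l. split; [|split;[|split]].
  - apply ImpIntInf_of_RInt; auto. intros e He. destruct (Hconv e He) as [M [_ HM]].
    exists M. intros; auto.
  - intros V HV. apply Hub. exists V; auto.
  - apply Hlub. intros x [V [HV ->]]. now apply HB.
  - exact Hconv.
Qed.

Lemma is_RInt_uniqueR (f : R -> R) a b l : is_RInt f a b l -> RInt f a b = l.
Proof. apply (@is_RInt_unique R_CompleteNormedModule). Qed.
Lemma RInt_minusR (f g : R -> R) a b : ex_RInt f a b -> ex_RInt g a b ->
  RInt (fun x => f x - g x) a b = RInt f a b - RInt g a b.
Proof. intros. apply (@RInt_minus R_CompleteNormedModule); auto. Qed.
Lemma RInt_plusR (f g : R -> R) a b : ex_RInt f a b -> ex_RInt g a b ->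
  RInt (fun x => f x + g x) a b = RInt f a b + RInt g a b.
Proof. intros. apply (@RInt_plus R_CompleteNormedModule); auto. Qed.
Lemma RInt_scalR (f : R -> R) a b l : ex_RInt f a b ->
  RInt (fun x => l * f x) a b = l * RInt f a b.
Proof. intros. apply (@RInt_scal R_CompleteNormedModule); auto. Qed.
Lemma RInt_ChaslesR (f : R -> R) a b c : ex_RInt f a b -> ex_RInt f b c ->
  RInt f a b + RInt f b c = RInt f a c.
Proof. intros. apply (@RInt_Chasles R_CompleteNormedModule); auto. Qed.
Lemma ex_RInt_plusR (f g : R -> R) a b : ex_RInt f a b -> ex_RInt g a b -> ex_RInt (fun x => f x + g x) a b.
Proof. intros. apply (@ex_RInt_plus R_NormedModule); auto. Qed.
Lemma ex_RInt_minusR (f g : R -> R) a b : ex_RInt f a b -> ex_RInt g a b -> ex_RInt (fun x => f x - g x) a b.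
Proof. intros. apply (@ex_RInt_minus R_NormedModule); auto. Qed.
Lemma ex_RInt_scalR (f : R -> R) a b l : ex_RInt f a b -> ex_RInt (fun x => l * f x) a b.
Proof. intros. apply (@ex_RInt_scal R_NormedModule); auto. Qed.
Lemma RInt_extR (f g : R -> R) a b : (forall x, Rmin a b < x < Rmax a b -> f x = g x) -> RInt f a b = RInt g a b.
Proof. intros. apply (@RInt_ext R_CompleteNormedModule); auto. Qed.
Lemma ex_RInt_extR (f g : R -> R) a b : (forall x, Rmin a b < x < Rmax a b -> f x = g x) -> ex_RInt f a b -> ex_RInt g a b.
Proof. intros. apply (@ex_RInt_ext R_NormedModule f); auto. Qed.
Lemma ex_RInt_contR (f : R -> R) a b : (forall z, Rmin a b <= z <= Rmax a b -> continuous f z) -> ex_RInt f a b.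
Proof. intros. apply (@ex_RInt_continuous R_CompleteNormedModule); auto. Qed.
Lemma RInt_pointR (f : R -> R) a : RInt f a a = 0.
Proof. apply (@RInt_point R_CompleteNormedModule). Qed.

Lemma cont_of_deriv (f : R -> R) x : ex_derive f x -> continuous f x.
Proof. intros H. apply (ex_derive_continuous f x H). Qed.

Lemma cont_pow_exp n a t : continuous (fun t => t ^ n * exp (- (a * t))) t.
Proof. apply cont_of_deriv. auto_derive. auto. Qed.

Lemma gamma_bound a n V : 0 < a -> 0 <= V ->
  RInt (fun t => t ^ n * exp (- (a * t))) 0 V <= INR (fact n) / a ^ (S n).
Proof.
  intros Ha HV. induction n.
  - assert (H : is_RInt (fun t => t ^ 0 * exp (- (a * t))) 0 V
               (minus ((fun t => - exp (- (a*t)) / a) V) ((fun t => - exp (- (a*t)) / a) 0))).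
    { apply (@is_RInt_derive R_CompleteNormedModule (fun t => - exp (- (a*t)) / a)).
      - intros x _. auto_derive. auto. field. lra.
      - intros x _. apply cont_pow_exp. }
    rewrite (@is_RInt_unique R_CompleteNormedModule _ _ _ _ H). unfold minus, plus, opp; simpl.
    replace (a * 0) with 0 by ring. rewrite Ropp_0, exp_0.
    assert (0 < exp (- (a*V))) by apply exp_pos.
    apply (Rmult_le_reg_r a); [lra|]. field_simplify; lra.
  - set (g := fun t => t ^ n * exp (- (a * t))).
    set (h := fun t => t ^ (S n) * exp (- (a * t))).
    assert (Hd : is_RInt (fun t => minus (h t) (scal (INR (S n) / a) (g t))) 0 V
               (minus ((fun t => - t ^ (S n) * exp (- (a*t)) / a) V) ((fun t => - t ^ (S n) * exp (- (a*t)) / a) 0))).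
    { apply (@is_RInt_derive R_CompleteNormedModule (fun t => - t ^ (S n) * exp (- (a*t)) / a)).
      - intros x _. unfold h, g, minus, plus, opp, scal; simpl. unfold mult; simpl. auto_derive. auto.
        destruct n as [|m]; simpl; field; lra.
      - intros x _. unfold minus, plus, opp, scal; simpl. unfold mult; simpl.
        apply cont_of_deriv. unfold h, g. auto_derive. auto. }
    assert (Exh : ex_RInt h 0 V) by (apply ex_RInt_cont0; [intros; apply cont_pow_exp| lra | lra]).
    assert (Exg : ex_RInt g 0 V) by (apply ex_RInt_cont0; [intros; apply cont_pow_exp| lra | lra]).
    apply is_RInt_uniqueR in Hd.
    rewrite (RInt_extR _ (fun t => h t - INR (S n) / a * g t)) in Hd by reflexivity.
    rewrite RInt_minusR in Hd; auto. 2: apply ex_RInt_scalR; auto.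
    rewrite RInt_scalR in Hd; auto.
    unfold minus, plus, opp in Hd; simpl in Hd.
    fold h. 
    assert (0 <= V ^ S n * exp (- (a*V)) / a).
    { apply Rdiv_le_0_compat; [|lra]. apply Rmult_le_pos. apply pow_le; lra. left; apply exp_pos. }

    assert (RInt h 0 V = INR (S n) / a * RInt g 0 V - V ^ S n * exp (- (a * V)) / a).
    { change (match n with 0%nat => 1 | S _ => INR n + 1 end) with (INR (S n)) in Hd. change (V * V ^ n) with (V ^ S n) in Hd. rewrite Rmult_0_l, Ropp_0, Rmult_0_l in Hd. rewrite ?Ropp_0 in Hd. unfold Rdiv in Hd |- *. lra. }
    rewrite H0. fold g in IHn.
    assert (INR (S n) / a * RInt g 0 V <= INR (S n) / a * (INR (fact n) / a ^ S n)).
    { apply Rmult_le_compat_l. apply Rdiv_le_0_compat. apply pos_INR. lra. auto. }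
    replace (INR (fact (S n)) / a ^ S (S n)) with (INR (S n) / a * (INR (fact n) / a ^ S n)).
    lra. rewrite fact_simpl, mult_INR. simpl. field. split; [apply pow_nonzero|]; lra.
Qed.

Lemma cR_plus (f g : R -> R) x : continuous f x -> continuous g x -> continuous (fun t => f t + g t) x.
Proof. intros. apply (@continuous_plus R_UniformSpace R_AbsRing R_NormedModule f g); auto. Qed.
Lemma cR_mult (f g : R -> R) x : continuous f x -> continuous g x -> continuous (fun t => f t * g t) x.
Proof. intros. apply (@continuous_mult R_UniformSpace R_AbsRing f g); auto. Qed.
Lemma cR_const (c x : R) : continuous (fun _ : R => c) x.
Proof. apply (@continuous_const R_UniformSpace R_UniformSpace). Qed.
Lemma cR_id (x : R) : continuous (fun t : R => t) x.
Proof. apply (@continuous_id R_UniformSpace). Qed.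
Lemma cR_comp (f g : R -> R) x : continuous f x -> continuous g (f x) -> continuous (fun t => g (f t)) x.
Proof. intros. apply (@continuous_comp R_UniformSpace R_UniformSpace R_UniformSpace f g); auto. Qed.
Lemma cR_inv x : x <> 0 -> continuous Rinv x.
Proof. intros. apply cont_of_deriv. auto_derive. auto. Qed.
Lemma cR_exp x : continuous exp x.
Proof. apply cont_of_deriv. auto_derive. auto. Qed.
Lemma cR_ln x : 0 < x -> continuous ln x.
Proof. intros. apply cont_of_deriv. auto_derive. auto. Qed.
Lemma cR_opp (f : R -> R) x : continuous f x -> continuous (fun t => - f t) x.
Proof. intros. apply (cR_comp f Ropp). auto. apply cont_of_deriv. auto_derive. auto. Qed.
Lemma cR_minus (f g : R -> R) x : continuous f x -> continuous g x -> continuous (fun t => f t - g t) x.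
Proof. intros. apply cR_plus; auto. apply cR_opp; auto. Qed.
Lemma cR_pow (f : R -> R) n x : continuous f x -> continuous (fun t => f t ^ n) x.
Proof. intros. apply (cR_comp f (fun u => u ^ n)). auto. apply cont_of_deriv. auto_derive. auto. Qed.
Lemma cR_invf (f : R -> R) x : continuous f x -> f x <> 0 -> continuous (fun t => / f t) x.
Proof. intros. apply (cR_comp f Rinv); auto. apply cR_inv; auto. Qed.
Lemma cR_div (f g : R -> R) x : continuous f x -> continuous g x -> g x <> 0 -> continuous (fun t => f t / g t) x.
Proof. intros. unfold Rdiv. apply cR_mult; auto. apply cR_invf; auto. Qed.
Lemma cR_ext (f g : R -> R) x : locally x (fun y => g y = f y) -> continuous g x -> continuous f x.
Proof. intros. apply (@continuous_ext_loc R_UniformSpace R_UniformSpace f g x); auto. Qed.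

Lemma cR_sum (f : nat -> R -> R) n x : (forall i, (i <= n)%nat -> continuous (f i) x) ->
  continuous (fun t => sum_f_R0 (fun i => f i t) n) x.
Proof.
  induction n; intros H; simpl.
  - apply H; lia.
  - apply cR_plus. apply IHn; intros; apply H; lia. apply H; lia.
Qed.
Lemma cR_prod (f : nat -> R -> R) n x : (forall i, (i <= n)%nat -> continuous (f i) x) ->
  continuous (fun t => prod_f_R0 (fun i => f i t) n) x.
Proof.
  induction n; intros H; simpl.
  - apply H; lia.
  - apply cR_mult. apply IHn; intros; apply H; lia. apply H; lia.
Qed.

Lemma RInt_sum (f : nat -> R -> R) n u v :
  (forall i, (i <= n)%nat -> ex_RInt (f i) u v) ->
  ex_RInt (fun t => sum_f_R0 (fun i => f i t) n) u v /\
  RInt (fun t => sum_f_R0 (fun i => f i t) n) u v = sum_f_R0 (fun i => RInt (f i) u v) n.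
Proof.
  induction n; intros H; simpl.
  - split. apply H; lia. reflexivity.
  - destruct IHn as [E1 E2]. intros; apply H; lia.
    split. { apply ex_RInt_plusR. auto. apply H; lia. }
    rewrite RInt_plusR, E2; [reflexivity| auto | apply H; lia].
Qed.

Lemma sum_lim (F : nat -> R -> R) (L : nat -> R) n :
  (forall i, (i <= n)%nat -> forall e, e > 0 -> exists M, forall v, M <= v -> Rabs (F i v - L i) < e) ->
  forall e, e > 0 -> exists M, forall v, M <= v -> Rabs (sum_f_R0 (fun i => F i v) n - sum_f_R0 L n) < e.
Proof.
  induction n; intros H e He; simpl.
  - apply H; auto; lia.
  - destruct (IHn ltac:(intros; apply H; auto; lia) (e/2) ltac:(lra)) as [M1 H1].
    destruct (H (S n) ltac:(lia) (e/2) ltac:(lra)) as [M2 H2].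
    exists (Rmax M1 M2). intros v Hv.
    specialize (H1 v ltac:(eapply Rle_trans;[apply Rmax_l|exact Hv])).
    specialize (H2 v ltac:(eapply Rle_trans;[apply Rmax_r|exact Hv])).
    apply Rabs_def2 in H1. apply Rabs_def2 in H2. apply Rabs_def1; lra.
Qed.

Lemma cv_le_const (v : nat -> R) L c n0 : Un_cv v L -> (forall m, (n0 <= m)%nat -> v m <= c) -> L <= c.
Proof.
  intros Hv Hc. apply Rnot_lt_le. intro Hlt.
  destruct (Hv (L - c) ltac:(lra)) as [N HN].
  specialize (HN (max N n0) ltac:(lia)). specialize (Hc (max N n0) ltac:(lia)).
  unfold R_dist in HN. apply Rabs_def2 in HN. lra.
Qed.
Lemma cv_ge_const (v : nat -> R) L c n0 : Un_cv v L -> (forall m, (n0 <= m)%nat -> c <= v m) -> c <= L.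
Proof.
  intros Hv Hc. apply Rnot_lt_le. intro Hlt.
  destruct (Hv (c - L) ltac:(lra)) as [N HN].
  specialize (HN (max N n0) ltac:(lia)). specialize (Hc (max N n0) ltac:(lia)).
  unfold R_dist in HN. apply Rabs_def2 in HN. lra.
Qed.

Lemma sum_growing (w : nat -> R) : (forall k, 0 <= w k) -> forall n m, (n <= m)%nat -> sum_f_R0 w n <= sum_f_R0 w m.
Proof.
  intros Hw n m Hnm. induction Hnm. lra. simpl. specialize (Hw (S m)). lra.
Qed.

Lemma series_tail (u w : nat -> R) W : (forall k, 0 <= u k <= w k) -> Un_cv (sum_f_R0 w) W ->
  exists U, Un_cv (sum_f_R0 u) U /\ forall n, 0 <= U - sum_f_R0 u n <= W - sum_f_R0 w n.
Proof.
  intros Hu HW.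
  assert (Hw0 : forall k, 0 <= w k) by (intros k; specialize (Hu k); lra).
  assert (HwW : forall n, sum_f_R0 w n <= W).
  { intros n. apply (cv_ge_const _ _ _ n HW). intros; apply sum_growing; auto. }
  assert (Hdiff : forall n m, (n <= m)%nat -> sum_f_R0 u m - sum_f_R0 u n <= sum_f_R0 w m - sum_f_R0 w n).
  { intros n m Hnm. induction Hnm. lra. simpl. specialize (Hu (S m)). lra. }
  assert (Hub : forall n, sum_f_R0 u n <= sum_f_R0 w n).
  { induction n; simpl. apply Hu. specialize (Hu (S n)). lra. }
  destruct (Un_cv_crit (sum_f_R0 u)) as [U HU].
  { intros n. simpl. specialize (Hu (S n)). lra. }
  { exists W. intros x [n ->]. specialize (Hub n). specialize (HwW n). lra. }
  exists U. split; auto. intros n. split.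
  - assert (sum_f_R0 u n <= U). { apply (cv_ge_const _ _ _ n HU). intros; apply sum_growing; auto.
      intros k; apply Hu. } lra.
  - assert (U - sum_f_R0 u n <= W - sum_f_R0 w n); [|lra].
    assert (U <= W - sum_f_R0 w n + sum_f_R0 u n); [|lra].
    apply (cv_le_const _ _ _ n HU). intros m Hm. specialize (Hdiff n m Hm). specialize (HwW m). lra.
Qed.

Lemma sum_le_lim (w : nat -> R) W : (forall k, 0 <= w k) -> Un_cv (sum_f_R0 w) W -> forall n, sum_f_R0 w n <= W.
Proof.
  intros Hw HW n. apply (cv_ge_const _ _ _ n HW). intros m Hm. apply (sum_growing w Hw n m Hm).
Qed.

Fixpoint pr (f : nat -> R) (n : nat) : R := match n with 0%nat => 1 | S m => pr f m * f m end.

Lemma prod_pr f n : prod_f_R0 f n = pr f (S n).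
Proof. induction n; simpl. ring. rewrite IHn. simpl. ring. Qed.

Lemma pr_ext f g n : (forall i, (i < n)%nat -> f i = g i) -> pr f n = pr g n.
Proof. induction n; intros H; simpl. auto. rewrite IHn, H; auto. Qed.

Lemma pr_bounds g n : (forall i, 0 <= g i <= 1) -> 0 <= pr g n <= 1.
Proof.
  intros H. induction n; simpl. lra. specialize (H n).
  split. apply Rmult_le_pos; lra. rewrite <- (Rmult_1_r 1). apply Rmult_le_compat; lra.
Qed.

Lemma pr_mono g m n : (forall i, 0 <= g i <= 1) -> (m <= n)%nat -> pr g n <= pr g m.
Proof.
  intros H Hmn. induction Hmn. lra. simpl. assert (HH := pr_bounds g m0 H). specialize (H m0).
  assert (pr g m0 * g m0 <= pr g m0 * 1) by (apply Rmult_le_compat_l; lra). lra.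
Qed.

Lemma pr_le g1 g2 n : (forall i, 0 <= g1 i <= g2 i) -> pr g1 n <= pr g2 n.
Proof.
  intros H. induction n; simpl. lra.
  assert (0 <= pr g1 n). { clear IHn. induction n; simpl. lra. specialize (H n). apply Rmult_le_pos; lra. }
  apply Rmult_le_compat; auto. apply H. apply H.
Qed.

Lemma pr_mul_t (g : nat -> R) t n : pr (fun i => g i * t) n = pr g n * t ^ n.
Proof. induction n; simpl. ring. rewrite IHn. ring. Qed.

Lemma cR_pr (f : nat -> R -> R) n x : (forall i, continuous (f i) x) ->
  continuous (fun t => pr (fun i => f i t) n) x.
Proof.
  intros H. induction n; simpl. apply cR_const. apply cR_mult; auto.
Qed.

Lemma exp_le_mono x y : x <= y -> exp x <= exp y.
Proof. intros [H|H]. left; apply exp_increasing; auto. subst; lra. Qed.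

Lemma ome_bounds x : 0 <= x -> 0 <= 1 - exp (- x) <= x /\ 1 - exp (- x) <= 1.
Proof.
  intros Hx. assert (H1 := exp_ineq1_le (- x)). assert (H2 : exp (- x) <= 1).
  { rewrite <- exp_0. apply exp_le_mono. lra. }
  assert (H3 := exp_pos (- x)). lra.
Qed.

Section Seq.
Variable a : nat -> R.
Variable j : nat.
Hypothesis Hj : (2 <= j)%nat.
Hypothesis Hpos : forall k, 1 <= a (S k).
Hypothesis Hmono : forall k, a (S k) <= a (S (S k)).

Definition hk (k : nat) (t : R) : R :=
  a k ^ j * t ^ (j - 1) * exp (- (a k * t)) / INR (fact (j - 1)) *
  pr (fun i => 1 - exp (- (a (S i) * t))) (k - 1).

Definition Dk (k : nat) : R :=
  INR (fact (j + k - 2)) / INR (fact (j - 1)) * pr (fun i => a (S i)) (k - 1) / a k ^ (k - 1).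

Lemma a_pos k : (1 <= k)%nat -> 0 < a k.
Proof. intros. destruct k. lia. specialize (Hpos k). lra. Qed.

Lemma a_mono k l : (1 <= k)%nat -> (k <= l)%nat -> a k <= a l.
Proof.
  intros Hk Hkl. induction Hkl. lra. destruct m. lia. specialize (Hmono m). lra.
Qed.

Lemma fact_pos' n : 0 < INR (fact n).
Proof. apply lt_0_INR. apply lt_O_fact. Qed.

Lemma EU_first (c : nat -> R) (k : nat) (t : R) : c k * exp (- (c k * t)) * (c k * t) ^ (j - 1) / INR (fact (j - 1)) =
   c k ^ j * t ^ (j - 1) * exp (- (c k * t)) / INR (fact (j - 1)).
Proof.
  assert (E : c k ^ j = c k * c k ^ (j - 1)). { rewrite tech_pow_Rmult. f_equal. lia. }
  rewrite E, Rpow_mult_distr. field. apply not_0_INR. apply fact_neq_0.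
Qed.

Lemma term_bounds N k t : (1 <= k <= N)%nat -> 0 <= t ->
  0 <= EU_integrand a N j k t <= hk k t.
Proof.
  intros Hk Ht. unfold EU_integrand, hk. rewrite EU_first by auto.
  assert (Hak := a_pos k ltac:(lia)).
  set (A := a k ^ j * t ^ (j - 1) * exp (- (a k * t)) / INR (fact (j - 1))).
  assert (HA : 0 <= A).
  { unfold A. apply Rdiv_le_0_compat; [|apply fact_pos'].
    apply Rmult_le_pos; [apply Rmult_le_pos|]; try (apply pow_le; lra). left; apply exp_pos. }
  set (g := fun i => if Nat.eqb (S i) k then 1 else 1 - exp (- (a (S i) * t))).
  assert (Hg : forall i, 0 <= g i <= 1).
  { intros i. unfold g. destruct (Nat.eqb (S i) k). lra.
    assert (0 < a (S i)) by (apply a_pos; lia).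
    destruct (ome_bounds (a (S i) * t)) as [H1 H2]. apply Rmult_le_pos; lra. lra. }
  rewrite prod_pr. fold g.
  assert (E : pr g (k - 1) = pr (fun i => 1 - exp (- (a (S i) * t))) (k - 1)).
  { apply pr_ext. intros i Hi. unfold g. destruct (Nat.eqb_spec (S i) k). lia. auto. }
  assert (HP := pr_bounds g (S (N - 1)) Hg).
  assert (HM := pr_mono g (k - 1) (S (N - 1)) Hg ltac:(lia)).
  split. apply Rmult_le_pos; lra.
  apply Rmult_le_compat_l; auto. rewrite <- E. auto.
Qed.

Lemma hk_nonneg k t : (1 <= k)%nat -> 0 <= t -> 0 <= hk k t.
Proof.
  intros Hk Ht. unfold hk. assert (Hak := a_pos k Hk).
  apply Rmult_le_pos.
  - apply Rdiv_le_0_compat; [|apply fact_pos'].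
    apply Rmult_le_pos; [apply Rmult_le_pos|]; try (apply pow_le; lra). left; apply exp_pos.
  - apply pr_bounds. intros i. assert (0 < a (S i)) by (apply a_pos; lia).
    destruct (ome_bounds (a (S i) * t)) as [H1 H2]. apply Rmult_le_pos; lra. lra.
Qed.

Lemma hk_cont k t : continuous (hk k) t.
Proof.
  unfold hk. apply cR_mult.
  - apply cont_of_deriv. auto_derive. auto.
  - apply (cR_pr (fun i t => 1 - exp (- (a (S i) * t)))). intros i.
    apply cont_of_deriv. auto_derive. auto.
Qed.

Lemma EU_cont N k t : continuous (EU_integrand a N j k) t.
Proof.
  unfold EU_integrand. apply cR_mult.
  - apply cont_of_deriv. auto_derive. auto.
  - apply (cR_prod (fun i t => if Nat.eqb (S i) k then 1 else 1 - exp (- (a (S i) * t)))).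
    intros i _. destruct (Nat.eqb (S i) k). apply cR_const.
    apply cont_of_deriv. auto_derive. auto.
Qed.

Lemma pr_nonneg g n : (forall i, 0 <= g i) -> 0 <= pr g n.
Proof. intros H. induction n; simpl. lra. apply Rmult_le_pos; auto. Qed.

Lemma hk_int k u V : (1 <= k)%nat -> 0 <= u -> u <= V -> RInt (hk k) u V <= Dk k.
Proof.
  intros Hk Hu HV. assert (Hak := a_pos k Hk).
  set (C := a k ^ j / INR (fact (j - 1)) * pr (fun i => a (S i)) (k - 1)).
  assert (HC : 0 <= C).
  { unfold C. apply Rmult_le_pos. apply Rdiv_le_0_compat. apply pow_le; lra. apply fact_pos'.
    apply pr_nonneg. intros. assert (0 < a (S i)) by (apply a_pos; lia). lra. }
  set (n := (j + k - 2)%nat).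
  assert (Hc : forall t, 0 <= t -> continuous (hk k) t) by (intros; apply hk_cont).
  assert (Hp : forall t, 0 <= t -> 0 <= hk k t) by (intros; apply hk_nonneg; auto).
  assert (H1 : RInt (hk k) u V <= RInt (hk k) 0 V).
  { rewrite <- (RInt_ChaslesR (hk k) 0 u V) by (apply ex_RInt_cont0; auto; lra).
    assert (0 <= RInt (hk k) 0 u). { apply RInt_ge_0. lra. apply ex_RInt_cont0; auto; lra.
      intros; apply Hp; lra. } lra. }
  assert (H2 : RInt (hk k) 0 V <= RInt (fun t => C * (t ^ n * exp (- (a k * t)))) 0 V).
  { apply RInt_le. lra. apply ex_RInt_cont0; auto; lra.
    apply ex_RInt_cont0. intros; apply cR_mult. apply cR_const. apply cont_pow_exp. lra. lra.
    intros t Ht. unfold hk, C.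
    assert (Hpr : pr (fun i => 1 - exp (- (a (S i) * t))) (k - 1) <= pr (fun i => a (S i)) (k - 1) * t ^ (k - 1)).
    { rewrite <- pr_mul_t. apply pr_le. intros i. assert (0 < a (S i)) by (apply a_pos; lia).
      destruct (ome_bounds (a (S i) * t)) as [H1' H2']. apply Rmult_le_pos; lra. lra. }
    assert (En : t ^ n = t ^ (j - 1) * t ^ (k - 1)). { rewrite <- pow_add. f_equal. unfold n. lia. }
    rewrite En.
    assert (0 <= a k ^ j * t ^ (j - 1) * exp (- (a k * t)) / INR (fact (j - 1))).
    { apply Rdiv_le_0_compat; [|apply fact_pos'].
      apply Rmult_le_pos; [apply Rmult_le_pos|]; try (apply pow_le; lra). left; apply exp_pos. }
    apply Rle_trans with (a k ^ j * t ^ (j - 1) * exp (- (a k * t)) / INR (fact (j - 1)) *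
       (pr (fun i => a (S i)) (k - 1) * t ^ (k - 1))).
    apply Rmult_le_compat_l; auto. right. field. apply not_0_INR. apply fact_neq_0. }
  rewrite RInt_scalR in H2 by (apply ex_RInt_cont0; [intros; apply cont_pow_exp|lra|lra]).
  assert (H3 := gamma_bound (a k) n V Hak ltac:(lra)).
  assert (H4 : C * RInt (fun t => t ^ n * exp (- (a k * t))) 0 V <= C * (INR (fact n) / a k ^ S n)).
  { apply Rmult_le_compat_l; auto. }
  assert (E : C * (INR (fact n) / a k ^ S n) = Dk k).
  { unfold C, Dk. fold n.
    assert (Ej : a k ^ S n = a k ^ j * a k ^ (k - 1)). { rewrite <- pow_add. f_equal. unfold n. lia. }
    rewrite Ej. field. repeat split; try (apply pow_nonzero; lra); try (apply not_0_INR; apply fact_neq_0). }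
  lra.
Qed.

Lemma Dk_pos k : (1 <= k)%nat -> 0 < Dk k.
Proof.
  intros Hk. unfold Dk. apply Rdiv_lt_0_compat. apply Rmult_lt_0_compat.
  apply Rdiv_lt_0_compat; apply fact_pos'.
  clear Hk. induction (k - 1)%nat; simpl. lra. apply Rmult_lt_0_compat; auto. apply a_pos; lia.
  apply pow_lt. apply a_pos; auto.
Qed.

Lemma Dk_ratio k : (1 <= k)%nat -> Dk (S k) = Dk k * (INR (j + k - 1) * (a k / a (S k)) ^ k).
Proof.
  intros Hk. unfold Dk.
  replace (S k - 1)%nat with (S (k - 1)) by lia. simpl pr.
  replace (j + S k - 2)%nat with (S (j + k - 2)) by lia. rewrite fact_simpl, mult_INR.
  replace (S (j + k - 2)) with (j + k - 1)%nat by lia.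
  replace (S (k - 1)) with k by lia.
  replace (a (S (k - 1))) with (a k) by (f_equal; lia).
  assert (Hak := a_pos k Hk). assert (Hak1 := a_pos (S k) ltac:(lia)).
  assert (Ed : (a k / a (S k)) ^ k = a k ^ k / a (S k) ^ k).
  { unfold Rdiv. rewrite Rpow_mult_distr, pow_inv. ring. }
  rewrite Ed.
  assert (Ek : forall m, (1 <= m)%nat -> a k ^ m = a k ^ (m - 1) * a k).
  { intros m Hm; destruct m; [lia|]; simpl; rewrite Nat.sub_0_r; ring. }
  rewrite (Ek k Hk). field.
  repeat split; try (apply pow_nonzero; lra); try (apply not_0_INR; apply fact_neq_0); lra.
Qed.

End Seq.

Lemma rpow_pos_eq x b : 0 < x -> rpow x b = exp (b * ln x).
Proof. intros H. unfold rpow. destruct (Rle_dec x 0). lra. reflexivity. Qed.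

Lemma rpow_exp t b : rpow (exp (- t)) b = exp (- (b * t)).
Proof. rewrite rpow_pos_eq by apply exp_pos. rewrite ln_exp. f_equal. ring. Qed.

Lemma rpow_bounds x x1 a1 b : 0 < x -> x <= x1 -> x1 < 1 -> 0 < a1 -> a1 <= b ->
  0 < rpow x b /\ rpow x b <= rpow x1 b /\ rpow x1 b <= rpow x1 a1 /\ rpow x1 a1 < 1.
Proof.
  intros Hx Hx1 H1 Ha1 Hb. rewrite !rpow_pos_eq by lra.
  assert (Hl : ln x <= ln x1) by (apply ln_le; lra).
  assert (Hl1 : ln x1 < 0). { rewrite <- ln_1. apply ln_increasing; lra. }
  split. apply exp_pos. split. apply exp_le_mono. apply Rmult_le_compat_l; lra.
  split. apply exp_le_mono. nra. rewrite <- exp_0. apply exp_increasing. nra.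
Qed.

Lemma cont_rpow y b : 0 < y -> continuous (fun z => rpow z b) y.
Proof.
  intros Hy. apply (cR_ext (fun z => rpow z b) (fun z => exp (b * ln z))).
  - apply (locally_interval _ y 0 p_infty). simpl; auto. simpl; auto.
    intros z Hz _. simpl in Hz. rewrite rpow_pos_eq; auto.
  - apply (cR_comp (fun z => b * ln z) exp). apply cR_mult. apply cR_const. apply cR_ln; auto.
    apply cR_exp.
Qed.

Lemma tail_to0 (w : nat -> R) W : Un_cv (sum_f_R0 w) W ->
  forall e, e > 0 -> exists N, forall n, (N <= n)%nat -> W - sum_f_R0 w n < e.
Proof.
  intros H e He. destruct (H e He) as [N HN]. exists N. intros n Hn.
  specialize (HN n Hn). unfold R_dist in HN. apply Rabs_def2 in HN. lra.
Qed.

Section Xside.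
Variable a : nat -> R.
Variable j : nat.
Hypothesis Hj : (2 <= j)%nat.
Hypothesis Hpos : forall k, 1 <= a (S k).
Hypothesis Hmono : forall k, a (S k) <= a (S (S k)).
Hypothesis Hsum : forall x, 0 < x < 1 -> exists B, forall n,
   sum_f_R0 (fun k => a (S k) ^ j * rpow x (a (S k))) n <= B.

Definition rr x k := rpow x (a (S k)).
Definition Lpart n x := sum_f_R0 (fun k => a (S k) ^ j * rr x k / (1 - rr x k)) n.
Definition Fpart n x := prod_f_R0 (fun k => 1 - rr x k) n.

Lemma a1_le k : a 1 <= a (S k).
Proof. apply (a_mono a j Hj Hmono); lia. Qed.

Lemma rr_bounds x x1 k : 0 < x -> x <= x1 -> x1 < 1 ->
  0 < rr x k /\ rr x k <= rpow x1 (a (S k)) /\ rpow x1 (a (S k)) <= rpow x1 (a 1) /\ rpow x1 (a 1) < 1.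
Proof.
  intros. unfold rr. apply rpow_bounds; auto. specialize (Hpos 0). simpl in Hpos. lra.
  apply a1_le.
Qed.

Lemma ak_pow_ge1 k : 1 <= a (S k) ^ j.
Proof. apply pow_R1_Rle. apply Hpos. Qed.

Lemma conv_bounded (w : nat -> R) : (forall k, 0 <= w k) -> (exists B, forall n, sum_f_R0 w n <= B) ->
  exists W, Un_cv (sum_f_R0 w) W.
Proof.
  intros Hw [B HB]. apply Un_cv_crit. intros n; simpl. specialize (Hw (S n)). lra.
  exists B. intros x [n ->]. apply HB.
Qed.

Lemma L_unif x1 : 0 < x1 < 1 -> exists Cl (T : nat -> R),
  (forall e, e > 0 -> exists N, forall n, (N <= n)%nat -> T n < e) /\
  forall x, 0 < x <= x1 ->
     Un_cv (fun n => Lpart n x) (Lfun a j x) /\ 0 <= Lfun a j x <= Cl /\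
     (forall n, 0 <= Lfun a j x - Lpart n x <= T n).
Proof.
  intros Hx1.
  set (c := 1 - rpow x1 (a 1)).
  assert (Hc : 0 < c). { destruct (rr_bounds x1 x1 0 ltac:(lra) ltac:(lra) ltac:(lra)) as [_ [_ [_ H]]].
    unfold c; lra. }
  set (w := fun k => a (S k) ^ j * rpow x1 (a (S k)) / c).
  assert (Hw : forall k, 0 <= w k).
  { intros k. unfold w. destruct (rr_bounds x1 x1 k ltac:(lra) ltac:(lra) ltac:(lra)) as [H _].
    unfold rr in H. assert (H1 := ak_pow_ge1 k). apply Rdiv_le_0_compat; [|lra]. apply Rmult_le_pos; lra. }
  destruct (conv_bounded w Hw) as [W HW].
  { destruct (Hsum x1 Hx1) as [B HB]. exists (B / c). intros n.
    assert (E : sum_f_R0 w n = sum_f_R0 (fun k => a (S k) ^ j * rpow x1 (a (S k))) n / c).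
    { unfold w. clear -Hc. induction n; simpl. reflexivity. rewrite IHn. field. lra. }
    rewrite E. apply Rmult_le_compat_r. left; apply Rinv_0_lt_compat; lra. apply HB. }
  exists W, (fun n => W - sum_f_R0 w n). split.
  { apply tail_to0; auto. }
  intros x Hx.
  assert (Hterm : forall k, 0 <= a (S k) ^ j * rr x k / (1 - rr x k) <= w k).
  { intros k. destruct (rr_bounds x x1 k ltac:(lra) ltac:(lra) ltac:(lra)) as [H1 [H2 [H3 H4]]].
    assert (H5 := ak_pow_ge1 k). split.
    - apply Rdiv_le_0_compat. apply Rmult_le_pos; lra. lra.
    - unfold w. unfold Rdiv. apply Rmult_le_compat. apply Rmult_le_pos; lra.
      left; apply Rinv_0_lt_compat; lra. apply Rmult_le_compat_l; lra.
      apply Rinv_le_contravar. auto. unfold c. lra. }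
  destruct (series_tail (fun k => a (S k) ^ j * rr x k / (1 - rr x k)) w W) as [U [HU HT]]; auto.
  assert (EL : Lfun a j x = U). { unfold Lfun. apply lim_seq_eq. exact HU. }
  rewrite EL. split; [exact HU|]. split.
  - split.
    + specialize (HT 0%nat). assert (0 <= sum_f_R0 (fun k => a (S k) ^ j * rr x k / (1 - rr x k)) 0).
      { simpl. apply Hterm. } lra.
    + apply (cv_le_const _ _ _ 0 HU). intros m _.
      apply Rle_trans with (sum_f_R0 w m). 2: apply (sum_le_lim w W Hw HW).
      clear -Hterm. induction m; simpl. apply Hterm. specialize (Hterm (S m)). lra.
  - exact HT.
Qed.

Lemma Fpart_step n x : Fpart (S n) x = Fpart n x * (1 - rr x (S n)).
Proof. reflexivity. Qed.

Lemma F_unif x1 : 0 < x1 < 1 -> exists (T : nat -> R),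
  (forall e, e > 0 -> exists N, forall n, (N <= n)%nat -> T n < e) /\
  forall x, 0 < x <= x1 ->
     Un_cv (fun n => Fpart n x) (Ffun a x) /\ 0 <= Ffun a x /\
     (forall n, 0 <= Fpart n x <= 1 /\ 0 <= Fpart n x - Ffun a x <= T n).
Proof.
  intros Hx1.
  set (w := fun k => a (S k) ^ j * rpow x1 (a (S k))).
  assert (Hw : forall k, 0 <= w k).
  { intros k. unfold w. destruct (rr_bounds x1 x1 k ltac:(lra) ltac:(lra) ltac:(lra)) as [H _].
    unfold rr in H. assert (H1 := ak_pow_ge1 k). apply Rmult_le_pos; lra. }
  destruct (conv_bounded w Hw) as [W HW]. { apply Hsum; auto. }
  assert (HwW : forall n, sum_f_R0 w n <= W).
  { intros n. apply (sum_le_lim w W Hw HW). }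
  exists (fun n => W - sum_f_R0 w n). split. { apply tail_to0; auto. }
  intros x Hx.
  assert (Hr : forall k, 0 < rr x k /\ rr x k <= w k /\ rr x k < 1).
  { intros k. destruct (rr_bounds x x1 k ltac:(lra) ltac:(lra) ltac:(lra)) as [H1 [H2 [H3 H4]]].
    assert (H5 := ak_pow_ge1 k). unfold w. split; auto. split. 2: lra.
    assert (0 <= rpow x1 (a (S k))) by lra.
    apply Rle_trans with (1 * rpow x1 (a (S k))). lra. apply Rmult_le_compat_r; lra. }
  assert (HF01 : forall n, 0 <= Fpart n x <= 1).
  { induction n. unfold Fpart; simpl. destruct (Hr 0%nat). lra.
    rewrite Fpart_step. destruct (Hr (S n)) as [H1 [H2 H3]].
    split. apply Rmult_le_pos; lra. rewrite <- (Rmult_1_r 1). apply Rmult_le_compat; lra. }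
  assert (Hdiff : forall n m, (n <= m)%nat -> 0 <= Fpart n x - Fpart m x <= sum_f_R0 w m - sum_f_R0 w n).
  { intros n m Hnm. induction Hnm. lra. rewrite Fpart_step. simpl sum_f_R0.
    destruct (Hr (S m)) as [H1 [H2 H3]]. specialize (HF01 m).
    assert (Fpart m x * rr x (S m) <= rr x (S m)) by (rewrite <- (Rmult_1_l (rr x (S m))) at 2; apply Rmult_le_compat_r; lra).
    assert (0 <= Fpart m x * rr x (S m)) by (apply Rmult_le_pos; lra).
    lra. }
  destruct (growing_cv (fun n => - Fpart n x)) as [mF HmF].
  { intros n. simpl. specialize (Hdiff n (S n) ltac:(lia)). lra. }
  { exists 0. intros y [n ->]. specialize (HF01 n). lra. }
  assert (HF : Un_cv (fun n => Fpart n x) (- mF)).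
  { intros e He. destruct (HmF e He) as [N HN]. exists N. intros n Hn. specialize (HN n Hn).
    unfold R_dist in *. replace (Fpart n x - - mF) with (- (- Fpart n x - mF)) by ring.
    rewrite Rabs_Ropp. auto. }
  assert (EF : Ffun a x = - mF). { unfold Ffun. apply lim_seq_eq. exact HF. }
  rewrite EF. split; auto. split.
  { apply (cv_ge_const _ _ _ 0 HF). intros; apply HF01. }
  intros n. split; auto. split.
  - assert (- mF <= Fpart n x); [|lra]. apply (cv_le_const _ _ _ n HF). intros m Hm.
    specialize (Hdiff n m Hm). lra.
  - assert (Fpart n x - W + sum_f_R0 w n <= - mF); [|lra].
    apply (cv_ge_const _ _ _ n HF). intros m Hm. specialize (Hdiff n m Hm). specialize (HwW m). lra.
Qed.

End Xside.

Lemma prod_ext (f g : nat -> R) n : (forall i, (i <= n)%nat -> f i = g i) -> prod_f_R0 f n = prod_f_R0 g n.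
Proof. induction n; intros H; simpl. apply H; lia. rewrite IHn, H; auto. Qed.

Lemma sum_ext (f g : nat -> R) n : (forall i, (i <= n)%nat -> f i = g i) -> sum_f_R0 f n = sum_f_R0 g n.
Proof. induction n; intros H; simpl. apply H; lia. rewrite IHn, H; auto. Qed.

Lemma prod_skip (g : nat -> R) k n : (k <= n)%nat ->
  prod_f_R0 (fun i => if Nat.eqb (S i) (S k) then 1 else g i) n * g k = prod_f_R0 g n.
Proof.
  induction n; intros Hk.
  - assert (k = 0%nat) by lia. subst. simpl. ring.
  - destruct (Nat.eq_dec k (S n)).
    + subst. simpl. rewrite Nat.eqb_refl.
      rewrite (prod_ext _ g n). ring. intros i Hi. destruct (Nat.eqb_spec i (S n)). lia. auto.
    + assert (Hf : Nat.eqb (S (S n)) (S k) = false) by (apply Nat.eqb_neq; lia).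
      cbn [prod_f_R0]. rewrite Hf.
      rewrite <- (IHn ltac:(lia)). ring.
Qed.

Section Tside.
Variable a : nat -> R.
Variable j : nat.
Hypothesis Hj : (2 <= j)%nat.
Hypothesis Hpos : forall k, 1 <= a (S k).
Hypothesis Hmono : forall k, a (S k) <= a (S (S k)).
Hypothesis Hsum : forall x, 0 < x < 1 -> exists B, forall n,
   sum_f_R0 (fun k => a (S k) ^ j * rpow x (a (S k))) n <= B.

Definition In n x := / INR (fact (j - 1)) * (Lpart a j n x * Fpart a n x * (Rabs (ln x)) ^ (j - 1) / x).
Definition Gn n t := In n (exp (- t)) * exp (- t).
Definition Gf t := I_integrand a j (exp (- t)) * exp (- t).
Definition SN N t := sum_f_R0 (fun k => EU_integrand a N j (S k) t) (N - 1).

Lemma rr_exp t k : rr a (exp (- t)) k = exp (- (a (S k) * t)).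
Proof. unfold rr. apply rpow_exp. Qed.

Lemma SN_Gn N t : (1 <= N)%nat -> 0 < t -> SN N t = Gn (N - 1) t.
Proof.
  intros HN Ht. unfold SN, Gn, In, Lpart, Fpart.
  rewrite ln_exp. rewrite Rabs_left by lra. rewrite Ropp_involutive.
  set (n := (N - 1)%nat).
  set (g := fun i => 1 - exp (- (a (S i) * t))).
  assert (Hg : forall k, g k <> 0).
  { intros k. unfold g. assert (0 < a (S k)) by (specialize (Hpos k); lra).
    assert (exp (- (a (S k) * t)) < 1). { rewrite <- exp_0. apply exp_increasing. nra. } lra. }
  rewrite (prod_ext _ g n) by (intros; unfold g; unfold rr; rewrite rpow_exp; reflexivity).
  rewrite (sum_ext (fun k => a (S k) ^ j * rr a (exp (- t)) k / (1 - rr a (exp (- t)) k)) (fun k => a (S k) ^ j * exp (- (a (S k) * t)) / g k) n) by (intros; cbv beta; unfold g, rr; rewrite !rpow_exp; reflexivity).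
  assert (E : forall k, (k <= n)%nat -> EU_integrand a N j (S k) t =
     a (S k) ^ j * exp (- (a (S k) * t)) / g k * (t ^ (j - 1) / INR (fact (j - 1)) * prod_f_R0 g n)).
  { intros k Hk. unfold EU_integrand. rewrite (EU_first j Hj a (S k) t).
    fold n. rewrite <- (prod_skip g k n Hk).
    rewrite (prod_ext (fun i => if Nat.eqb (S i) (S k) then 1 else 1 - exp (- (a (S i) * t)))
               (fun i => if Nat.eqb (S i) (S k) then 1 else g i) n) by (intros; reflexivity).
    field. split; [apply not_0_INR; apply fact_neq_0|apply Hg]. }
  rewrite (sum_ext _ _ n E).
  assert (Hs : forall (f : nat -> R) c m, sum_f_R0 (fun k => f k * c) m = sum_f_R0 f m * c).
  { intros f c m. induction m; simpl. ring. rewrite IHm. ring. }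
  rewrite Hs. field. split. apply Rgt_not_eq, exp_pos. apply not_0_INR. apply fact_neq_0.
Qed.


Lemma rr_lt1 y k : 0 < y < 1 -> 0 < rr a y k < 1.
Proof.
  intros Hy. destruct (rr_bounds a j Hj Hpos Hmono y y k ltac:(lra) ltac:(lra) ltac:(lra)) as [H1 [H2 [H3 H4]]]. lra.
Qed.

Lemma In_cont n y : 0 < y < 1 -> continuous (In n) y.
Proof.
  intros Hy. unfold In. apply cR_mult. apply cR_const.
  apply cR_div; [| apply cR_id | lra].
  apply cR_mult. apply cR_mult.
  - unfold Lpart. apply (cR_sum (fun k y => a (S k) ^ j * rr a y k / (1 - rr a y k))).
    intros i _. unfold rr. apply cR_div. apply cR_mult. apply cR_const. apply cont_rpow; lra.
    apply cR_minus. apply cR_const. apply cont_rpow; lra.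
    assert (H := rr_lt1 y i Hy). unfold rr in H. lra.
  - unfold Fpart. apply (cR_prod (fun k y => 1 - rr a y k)). intros i _. unfold rr.
    apply cR_minus. apply cR_const. apply cont_rpow; lra.
  - apply cR_pow. apply (cR_comp ln Rabs). apply cR_ln; lra. apply continuous_Rabs.
Qed.

Lemma Lpart_nonneg n x : 0 < x < 1 -> 0 <= Lpart a j n x.
Proof.
  intros Hx. unfold Lpart. induction n; simpl.
  - assert (H := rr_lt1 x 0 Hx). apply Rdiv_le_0_compat; [|lra]. apply Rmult_le_pos; [|lra].
    apply pow_le. specialize (Hpos 0). lra.
  - assert (H := rr_lt1 x (S n) Hx). apply Rplus_le_le_0_compat; auto.
    apply Rdiv_le_0_compat; [|lra]. apply Rmult_le_pos; [|lra]. apply pow_le. specialize (Hpos (S n)). lra.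
Qed.

Lemma I_unif x0 x1 : 0 < x0 -> x0 <= x1 -> x1 < 1 -> forall e, e > 0 -> exists N, forall n x,
  (N <= n)%nat -> x0 <= x <= x1 -> Rabs (I_integrand a j x - In n x) < e.
Proof.
  intros H0 H01 H1 e He.
  destruct (L_unif a j Hj Hpos Hmono Hsum x1 ltac:(lra)) as [Cl [TL [HTL HL]]].
  destruct (F_unif a j Hj Hpos Hmono Hsum x1 ltac:(lra)) as [TF [HTF HF]].
  set (K := Rabs (ln x0) ^ (j - 1) / x0).
  assert (HK : 0 <= K). { unfold K. apply Rdiv_le_0_compat; [|lra]. apply pow_le. apply Rabs_pos. }
  assert (HCl : 0 <= Cl). { destruct (HL x1 ltac:(lra)) as [_ [H _]]. lra. }
  set (e' := e / (2 * (K + 1) * (Cl + 1))).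
  assert (He' : 0 < e'). { unfold e'. apply Rdiv_lt_0_compat; auto. nra. }
  destruct (HTL e' He') as [N1 HN1]. destruct (HTF e' He') as [N2 HN2].
  exists (max N1 N2). intros n x Hn Hx.
  destruct (HL x ltac:(lra)) as [_ [HLb HLt]]. specialize (HLt n).
  destruct (HF x ltac:(lra)) as [_ [HF0 HFn]]. destruct (HFn n) as [HFp HFt].
  specialize (HN1 n ltac:(lia)). specialize (HN2 n ltac:(lia)).
  unfold I_integrand, In.
  set (L := Lfun a j x). set (Lp := Lpart a j n x). set (F := Ffun a x). set (Fp := Fpart a n x).
  fold L in HLb, HLt. fold Lp in HLt. fold F in HF0, HFt. fold Fp in HFp, HFt.
  set (c := / INR (fact (j - 1))).
  assert (Hc : 0 < c <= 1). { unfold c. split. apply Rinv_0_lt_compat. apply fact_pos'.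
    rewrite <- Rinv_1. apply Rinv_le_contravar. lra. apply (le_INR 1). apply lt_O_fact. }
  set (P := Rabs (ln x) ^ (j - 1) / x).
  assert (HP : 0 <= P <= K).
  { unfold P, K. split. apply Rdiv_le_0_compat; [|lra]. apply pow_le. apply Rabs_pos.
    assert (Hl : ln x < 0). { rewrite <- ln_1. apply ln_increasing; lra. }
    assert (Hl0 : ln x0 <= ln x) by (apply ln_le; lra).
    rewrite !Rabs_left by lra.
    unfold Rdiv. apply Rmult_le_compat. apply pow_le; lra. left; apply Rinv_0_lt_compat; lra.
    apply pow_incr. lra. apply Rinv_le_contravar; lra. }
  replace (c * (L * F * Rabs (ln x) ^ (j - 1) / x) - c * (Lp * Fp * Rabs (ln x) ^ (j - 1) / x))
    with (c * P * ((L - Lp) * F + Lp * (F - Fp))) by (unfold P; field; lra).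
  assert (Hb : Rabs ((L - Lp) * F + Lp * (F - Fp)) <= e' + Cl * e').
  { assert (0 <= Lp) by (apply Lpart_nonneg; lra). assert (0 <= Lp <= L) by lra.
    assert (0 <= (L - Lp) * F <= e' * 1). { split. apply Rmult_le_pos; lra. apply Rmult_le_compat; lra. }
    assert (0 <= Lp * (Fp - F) <= Cl * e'). { split. apply Rmult_le_pos; lra. apply Rmult_le_compat; lra. }
    apply Rabs_le. split; nra. }
  rewrite Rabs_mult. rewrite (Rabs_pos_eq (c * P)) by (apply Rmult_le_pos; lra).
  apply Rle_lt_trans with (1 * K * (e' + Cl * e')).
  { apply Rmult_le_compat. apply Rmult_le_pos; lra. apply Rabs_pos. apply Rmult_le_compat; lra. auto. }
  replace (1 * K * (e' + Cl * e')) with (e * (K / (2 * (K + 1)))) by (unfold e'; field; lra).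
  assert (K / (2 * (K + 1)) < 1). { apply (Rmult_lt_reg_r (2 * (K + 1))). lra. field_simplify; lra. }
  nra.
Qed.

Lemma I_cont x : 0 < x < 1 -> continuous (I_integrand a j) x.
Proof.
  intros Hx. apply continuity_pt_filterlim.
  set (r := mkposreal (Rmin x (1 - x) / 2) ltac:(apply Rdiv_lt_0_compat; [apply Rmin_glb_lt; lra|lra])).
  assert (Hr1 : r <= x / 2) by (simpl; assert (Rmin x (1 - x) <= x) by apply Rmin_l; lra).
  assert (Hr2 : r <= (1 - x) / 2) by (simpl; assert (Rmin x (1 - x) <= 1 - x) by apply Rmin_r; lra).
  apply (CVU_continuity In (I_integrand a j) x r).
  - intros e He. destruct (I_unif (x - r) (x + r) ltac:(lra) ltac:(destruct r; simpl in *; lra) ltac:(lra) e He) as [N HN].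
    exists N. intros n y Hn Hy. unfold Boule in Hy. apply Rabs_def2 in Hy. apply HN; auto. lra.
  - intros n y Hy. unfold Boule in Hy. apply Rabs_def2 in Hy. apply continuity_pt_filterlim.
    apply In_cont. lra.
  - unfold Boule. rewrite Rminus_diag, Rabs_R0. apply cond_pos.
Qed.

Lemma Gf_cont t : 0 < t -> continuous Gf t.
Proof.
  intros Ht. unfold Gf. apply cR_mult.
  - apply (cR_comp (fun t => exp (- t)) (I_integrand a j)).
    apply cont_of_deriv. auto_derive. auto.
    apply I_cont. split. apply exp_pos. rewrite <- exp_0. apply exp_increasing. lra.
  - apply cont_of_deriv. auto_derive. auto.
Qed.

Lemma Gn_cont n t : 0 < t -> continuous (Gn n) t.
Proof.
  intros Ht. unfold Gn. apply cR_mult.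
  - apply (cR_comp (fun t => exp (- t)) (In n)).
    apply cont_of_deriv. auto_derive. auto.
    apply In_cont. split. apply exp_pos. rewrite <- exp_0. apply exp_increasing. lra.
  - apply cont_of_deriv. auto_derive. auto.
Qed.

Lemma G_unif d T : 0 < d -> d <= T -> forall e, e > 0 -> exists N, forall n t,
  (N <= n)%nat -> d <= t <= T -> Rabs (Gf t - Gn n t) < e.
Proof.
  intros Hd HdT e He.
  assert (Hx0 : 0 < exp (- T)) by apply exp_pos.
  assert (Hx01 : exp (- T) <= exp (- d)) by (apply exp_le_mono; lra).
  assert (Hx1 : exp (- d) < 1) by (rewrite <- exp_0; apply exp_increasing; lra).
  destruct (I_unif _ _ Hx0 Hx01 Hx1 e He) as [N HN]. exists N. intros n t Hn Ht.
  unfold Gf, Gn. rewrite <- Rmult_minus_distr_r, Rabs_mult.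
  rewrite (Rabs_pos_eq (exp (- t))) by (left; apply exp_pos).
  assert (exp (- t) <= 1) by (rewrite <- exp_0; apply exp_le_mono; lra).
  assert (HH := HN n (exp (- t)) Hn ltac:(split; apply exp_le_mono; lra)).
  assert (0 < exp (- t)) by apply exp_pos.
  assert (0 <= Rabs (I_integrand a j (exp (- t)) - In n (exp (- t)))) by apply Rabs_pos.
  nra.
Qed.

Lemma Gf_nonneg t : 0 < t -> 0 <= Gf t.
Proof.
  intros Ht. unfold Gf, I_integrand.
  set (x := exp (- t)).
  assert (Hx : 0 < x < 1). { split. apply exp_pos. unfold x; rewrite <- exp_0; apply exp_increasing; lra. }
  destruct (L_unif a j Hj Hpos Hmono Hsum x Hx) as [Cl [TL [_ HL]]].
  destruct (F_unif a j Hj Hpos Hmono Hsum x Hx) as [TF [_ HF]].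
  destruct (HL x ltac:(lra)) as [_ [HLb _]]. destruct (HF x ltac:(lra)) as [_ [HF0 _]].
  apply Rmult_le_pos; [|lra]. apply Rmult_le_pos. left; apply Rinv_0_lt_compat, fact_pos'.
  apply Rdiv_le_0_compat; [|lra]. apply Rmult_le_pos. apply Rmult_le_pos; lra.
  apply pow_le, Rabs_pos.
Qed.

Lemma SN_cont N t : continuous (SN N) t.
Proof.
  unfold SN. apply (cR_sum (fun k t => EU_integrand a N j (S k) t)). intros. apply EU_cont.
Qed.

End Tside.

Fixpoint sumk (f : nat -> R) (n : nat) : R := match n with 0%nat => 0 | S m => sumk f m + f (S m) end.

Lemma sumk_sum f N : (1 <= N)%nat -> sum_f_R0 (fun k => f (S k)) (N - 1) = sumk f N.
Proof.
  intros HN. destruct N. lia. replace (S N - 1)%nat with N by lia. clear HN.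
  induction N; simpl. ring. rewrite IHN. simpl. ring.
Qed.

Lemma sumk_le f g N : (forall k, (1 <= k <= N)%nat -> f k <= g k) -> sumk f N <= sumk g N.
Proof. induction N; intros H; simpl. lra. assert (H1 := H (S N) ltac:(lia)). assert (sumk f N <= sumk g N) by (apply IHN; intros; apply H; lia). lra. Qed.

Lemma sumk_split_le f g K N : (K <= N)%nat -> (forall k, (K < k <= N)%nat -> f k <= g k) ->
  sumk f N - sumk f K <= sumk g N - sumk g K.
Proof.
  intros HKN. induction HKN; intros H. lra. simpl.
  assert (H1 := H (S m) ltac:(lia)). assert (sumk f m - sumk f K <= sumk g m - sumk g K) by (apply IHHKN; intros; apply H; lia). lra.
Qed.

Lemma sumk_const_le f c K : (forall k, (1 <= k <= K)%nat -> f k <= c) -> sumk f K <= INR K * c.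
Proof.
  induction K; intros H; cbn [sumk]. simpl. lra. rewrite S_INR.
  assert (H1 := H (S K) ltac:(lia)). assert (sumk f K <= INR K * c) by (apply IHK; intros; apply H; lia). lra.
Qed.

Lemma sumk_nonneg f K : (forall k, (1 <= k <= K)%nat -> 0 <= f k) -> 0 <= sumk f K.
Proof. intros H. assert (H' := sumk_le (fun _ => 0) f K H). assert (sumk (fun _ => 0) K = 0). { clear. induction K; simpl; lra. } lra. Qed.

Lemma sumk_mono f K N : (K <= N)%nat -> (forall k, (1 <= k)%nat -> 0 <= f k) -> sumk f K <= sumk f N.
Proof. intros H Hf. induction H. lra. simpl. specialize (Hf (S m) ltac:(lia)). lra. Qed.

Lemma RInt_constR (c u v : R) : RInt (fun _ => c) u v = (v - u) * c.
Proof. rewrite (@RInt_const R_CompleteNormedModule). reflexivity. Qed.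

Section Main.
Variable a : nat -> R.
Variable j : nat.
Hypothesis Hj : (2 <= j)%nat.
Hypothesis Hpos : forall k, 1 <= a (S k).
Hypothesis Hmono : forall k, a (S k) <= a (S (S k)).
Hypothesis Hsum : forall x, 0 < x < 1 -> exists B, forall n,
   sum_f_R0 (fun k => a (S k) ^ j * rpow x (a (S k))) n <= B.
Hypothesis Hratio : exists K0, (1 <= K0)%nat /\ forall k, (K0 <= k)%nat ->
   INR (j + k - 1) * (a k / a (S k)) ^ k <= 1 / 2.

Let D := Dk a j.
Let h := hk a j.

Lemma D_pos k : (1 <= k)%nat -> 0 < D k.
Proof. intros. apply (Dk_pos a j Hj Hpos); auto. Qed.

Lemma D_tail_bound K0 : (1 <= K0)%nat -> (forall k, (K0 <= k)%nat -> INR (j + k - 1) * (a k / a (S k)) ^ k <= 1 / 2) ->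
  forall K N, (K0 <= K)%nat -> (K <= N)%nat ->
  sumk D N - sumk D K <= D K0 * ((1/2) ^ (K - K0) - (1/2) ^ (N - K0)).
Proof.
  intros H1 Hr.
  assert (Hg : forall k, (K0 <= k)%nat -> D k <= D K0 * (1/2) ^ (k - K0)).
  { intros k Hk. induction Hk. rewrite Nat.sub_diag. simpl. lra.
    unfold D. rewrite (Dk_ratio a j Hj Hpos) by lia. fold D.
    replace (S m - K0)%nat with (S (m - K0)) by lia. simpl.
    assert (0 <= INR (j + m - 1) * (a m / a (S m)) ^ m).
    { apply Rmult_le_pos. apply pos_INR. apply pow_le. apply Rdiv_le_0_compat.
      left; apply (a_pos a j Hj Hpos); lia. apply (a_pos a j Hj Hpos); lia. }
    assert (0 < D m) by (apply D_pos; lia).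
    specialize (Hr m Hk).
    apply Rle_trans with (D m * (1/2)). apply Rmult_le_compat_l; lra.
    assert (0 <= D K0 * (1/2)^(m - K0) * (1/2)) by (apply Rmult_le_pos; [apply Rmult_le_pos; [left; apply D_pos; lia| apply pow_le; lra]|lra]).
    nra. }
  intros K N HK HKN. induction HKN.
  - lra.
  - cbn [sumk]. assert (H2 := Hg (S m) ltac:(lia)).
    replace (S m - K0)%nat with (S (m - K0)) in * by lia. cbn [pow] in *. set (q := (1/2) ^ (m - K0)) in *. set (p := (1/2) ^ (K - K0)) in *. nra.
Qed.

Lemma D_tail : forall e, e > 0 -> exists K, (1 <= K)%nat /\ forall N, (K <= N)%nat -> sumk D N - sumk D K <= e.
Proof.
  destruct Hratio as [K0 [H1 Hr]]. intros e He.
  assert (HD := D_pos K0 H1).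
  destruct (pow_lt_1_zero (1/2) ltac:(rewrite Rabs_pos_eq; lra) (e / D K0) ltac:(apply Rdiv_lt_0_compat; lra)) as [M HM].
  exists (K0 + M)%nat. split. lia. intros N HN.
  assert (H := D_tail_bound K0 H1 Hr (K0 + M) N ltac:(lia) HN).
  replace (K0 + M - K0)%nat with M in H by lia.
  specialize (HM M ltac:(lia)). rewrite Rabs_pos_eq in HM by (apply pow_le; lra).
  assert (0 <= (1/2) ^ (N - K0)) by (apply pow_le; lra).
  assert (D K0 * (1/2) ^ M < e). { apply (Rmult_lt_reg_r (/ D K0)). apply Rinv_0_lt_compat; lra.
    replace (D K0 * (1/2) ^ M * / D K0) with ((1/2)^M) by (field; lra). unfold Rdiv in HM. lra. }
  nra.
Qed.

Lemma D_bounded : exists BD, forall N, sumk D N <= BD.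
Proof.
  destruct Hratio as [K0 [H1 Hr]]. exists (sumk D K0 + D K0). intros N.
  destruct (Compare_dec.le_lt_dec K0 N) as [HN|HN].
  - assert (H := D_tail_bound K0 H1 Hr K0 N ltac:(lia) HN).
    rewrite Nat.sub_diag in H. simpl in H.
    assert (0 <= (1/2) ^ (N - K0)) by (apply pow_le; lra). assert (HD := D_pos K0 H1). nra.
  - assert (sumk D N <= sumk D K0) by (apply sumk_mono; [lia| intros; left; apply D_pos; auto]).
    assert (HD := D_pos K0 H1). lra.
Qed.


Lemma RInt_sub_le (f : R -> R) u v : (forall t, 0 <= t -> continuous f t) -> (forall t, 0 <= t -> 0 <= f t) ->
  0 <= u -> u <= v -> RInt f u v <= RInt f 0 v.
Proof.
  intros Hc Hp Hu Hv. rewrite <- (RInt_ChaslesR f 0 u v) by (apply ex_RInt_cont0; auto; lra).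
  assert (0 <= RInt f 0 u) by (apply RInt_ge_0; [lra| apply ex_RInt_cont0; auto; lra | intros; apply Hp; lra]).
  lra.
Qed.

Lemma aK_ge k K : (1 <= k <= K)%nat -> a k ^ j <= a K ^ j.
Proof.
  intros Hk. apply pow_incr. split. left; apply (a_pos a j Hj Hpos); lia.
  apply (a_mono a j Hj Hmono); lia.
Qed.

Lemma h_le_const k t : (1 <= k)%nat -> 0 <= t <= 1 -> h k t <= a k ^ j.
Proof.
  intros Hk Ht. unfold h, hk. assert (Hak := a_pos a j Hj Hpos k Hk).
  assert (H1 : t ^ (j - 1) <= 1) by (rewrite <- (pow1 (j - 1)); apply pow_incr; lra).
  assert (H2 : exp (- (a k * t)) <= 1) by (rewrite <- exp_0; apply exp_le_mono; nra).
  assert (H3 : / INR (fact (j - 1)) <= 1).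
  { rewrite <- Rinv_1. apply Rinv_le_contravar. lra. apply (le_INR 1). apply lt_O_fact. }
  assert (H4 : 0 <= pr (fun i => 1 - exp (- (a (S i) * t))) (k - 1) <= 1).
  { apply pr_bounds. intros i. assert (0 < a (S i)) by (apply (a_pos a j Hj Hpos); lia).
    destruct (ome_bounds (a (S i) * t)) as [H5 H6]. apply Rmult_le_pos; lra. lra. }
  assert (0 <= a k ^ j) by (apply pow_le; lra).
  assert (0 <= t ^ (j - 1)) by (apply pow_le; lra).
  assert (0 < exp (- (a k * t))) by apply exp_pos.
  assert (0 < / INR (fact (j - 1))) by (apply Rinv_0_lt_compat, fact_pos').
  unfold Rdiv.
  apply Rle_trans with (a k ^ j * 1 * 1 * 1 * 1).
  2: lra.
  apply Rmult_le_compat; try lra.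
  - repeat apply Rmult_le_pos; lra.
  - apply Rmult_le_compat; try lra. repeat apply Rmult_le_pos; lra.
    apply Rmult_le_compat; try lra. apply Rmult_le_pos; lra.
    apply Rmult_le_compat; try lra.
Qed.

Lemma h_cont' k : forall t, 0 <= t -> continuous (h k) t.
Proof. intros; apply hk_cont. Qed.
Lemma h_nonneg' k : (1 <= k)%nat -> forall t, 0 <= t -> 0 <= h k t.
Proof. intros; apply (hk_nonneg a j Hj Hpos); auto. Qed.

Lemma h_small0 K : forall e, e > 0 -> exists d, 0 < d <= 1 /\ sumk (fun k => RInt (h k) 0 d) K <= e.
Proof.
  intros e He. set (A := Rabs (a K ^ j)).
  assert (HA : 0 <= A) by apply Rabs_pos.
  assert (HKA : 0 <= INR K * A) by (apply Rmult_le_pos; [apply pos_INR|auto]).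
  set (d := Rmin 1 (e / (INR K * A + 1))).
  assert (Hd1 : d <= 1) by apply Rmin_l.
  assert (Hd2 : d <= e / (INR K * A + 1)) by apply Rmin_r.
  assert (Hd0 : 0 < d) by (apply Rmin_glb_lt; [lra| apply Rdiv_lt_0_compat; lra]).
  exists d. split. lra.
  apply Rle_trans with (INR K * (d * A)).
  - apply sumk_const_le. intros k Hk.
    apply Rle_trans with (RInt (fun _ => a k ^ j) 0 d).
    + apply RInt_le. lra. apply ex_RInt_cont0; [apply h_cont'|lra|lra].
      apply ex_RInt_contR. intros; apply cR_const.
      intros t Ht. apply h_le_const; [lia|lra].
    + rewrite RInt_constR. replace (d - 0) with d by ring. apply Rmult_le_compat_l. lra.
      unfold A. apply Rle_trans with (a K ^ j). apply aK_ge; lia. apply Rle_abs.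
  - assert (d * (INR K * A + 1) <= e).
    { apply (Rmult_le_compat_r (INR K * A + 1)) in Hd2; [|lra]. unfold Rdiv in Hd2.
      rewrite Rmult_assoc, Rinv_l in Hd2; lra. }
    nra.
Qed.

Lemma h_small_inf K : forall e, e > 0 -> exists T, 1 <= T /\ forall v, T <= v -> sumk (fun k => RInt (h k) T v) K <= e.
Proof.
  intros e He. set (A := Rabs (a K ^ j)).
  assert (HA : 0 <= A) by apply Rabs_pos.
  set (a1 := a 1). assert (Ha1 : 0 < a1) by (apply (a_pos a j Hj Hpos); lia).
  set (G := INR (fact j) / a1 ^ S j).
  assert (HG : 0 <= G) by (apply Rdiv_le_0_compat; [left; apply fact_pos'| apply pow_lt; lra]).
  set (C := INR K * A * G).
  assert (HC : 0 <= C) by (unfold C; apply Rmult_le_pos; [apply Rmult_le_pos; [apply pos_INR|auto]|auto]).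
  set (T := Rmax 1 (C / e + 1)).
  assert (HT1 : 1 <= T) by apply Rmax_l. assert (HT2 : C / e + 1 <= T) by apply Rmax_r.
  exists T. split; auto. intros v Hv.
  apply Rle_trans with (INR K * (A / T * G)).
  - apply sumk_const_le. intros k Hk.
    assert (Hak := a_pos a j Hj Hpos k ltac:(lia)).
    assert (Ha1k : a1 <= a k) by (apply (a_mono a j Hj Hmono); lia).
    apply Rle_trans with (RInt (fun t => (A / T) * (t ^ j * exp (- (a1 * t)))) T v).
    + apply RInt_le. lra. apply ex_RInt_cont0; [apply h_cont'|lra|lra].
      apply ex_RInt_cont0; [|lra|lra]. intros; apply cR_mult. apply cR_const. apply cont_pow_exp.
      intros t Ht. unfold h, hk.
      assert (H4 : 0 <= pr (fun i => 1 - exp (- (a (S i) * t))) (k - 1) <= 1).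
      { apply pr_bounds. intros i. assert (0 < a (S i)) by (apply (a_pos a j Hj Hpos); lia).
        destruct (ome_bounds (a (S i) * t)) as [H5 H6]. apply Rmult_le_pos; lra. lra. }
      assert (H3 : 0 < / INR (fact (j - 1)) <= 1).
      { split. apply Rinv_0_lt_compat, fact_pos'.
        rewrite <- Rinv_1. apply Rinv_le_contravar. lra. apply (le_INR 1). apply lt_O_fact. }
      assert (Hakj : 0 <= a k ^ j <= A).
      { split. apply pow_le; lra. unfold A. apply Rle_trans with (a K ^ j). apply aK_ge; lia. apply Rle_abs. }
      assert (He1 : 0 < exp (- (a k * t)) <= exp (- (a1 * t))).
      { split. apply exp_pos. apply exp_le_mono. nra. }
      assert (Htj : 0 <= t ^ (j - 1) <= t ^ j / T).
      { split. apply pow_le; lra.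
        assert (E : t ^ j = t * t ^ (j - 1)). { rewrite tech_pow_Rmult. f_equal. lia. }
        rewrite E. apply (Rmult_le_reg_r T). lra. unfold Rdiv. rewrite Rmult_assoc, Rinv_l by lra.
        assert (0 <= t ^ (j - 1)) by (apply pow_le; lra). nra. }
      unfold Rdiv in *.
      set (P := pr (fun i => 1 - exp (- (a (S i) * t))) (k - 1)) in *.
      set (I := / INR (fact (j - 1))) in *.
      set (E1 := exp (- (a k * t))) in *. set (E2 := exp (- (a1 * t))) in *.
      set (Q := t ^ (j - 1)) in *. set (tj := t ^ j) in *. set (Ak := a k ^ j) in *.
      assert (0 <= tj * / T) by lra.
      assert (Ak * Q * E1 * I * P <= Ak * Q * E1).
      { assert (0 <= Ak * Q * E1) by (repeat apply Rmult_le_pos; lra).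
        assert (I * P <= 1) by nra. nra. }
      assert (Ak * Q * E1 <= A * (tj * / T) * E2).
      { apply Rmult_le_compat; try lra. apply Rmult_le_pos; lra. apply Rmult_le_compat; lra. }
      assert (A * (tj * / T) * E2 = A * / T * (tj * E2)) by ring. lra.
    + rewrite RInt_scalR by (apply ex_RInt_cont0; [intros; apply cont_pow_exp|lra|lra]).
      apply Rmult_le_compat_l. apply Rdiv_le_0_compat; lra.
      apply Rle_trans with (RInt (fun t => t ^ j * exp (- (a1 * t))) 0 v).
      apply RInt_sub_le; try lra. intros; apply cont_pow_exp. intros. apply Rmult_le_pos. apply pow_le; lra. left; apply exp_pos.
      apply gamma_bound; lra.
  - replace (INR K * (A / T * G)) with (C / T) by (unfold C; field; lra).
    apply (Rmult_le_reg_r T). lra. unfold Rdiv. rewrite Rmult_assoc, Rinv_l by lra.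
    assert (C <= e * (T - 1)). { assert (C / e <= T - 1) by lra.
      apply (Rmult_le_compat_r e) in H; [|lra]. unfold Rdiv in H. rewrite Rmult_assoc, Rinv_l in H; lra. }
    nra.
Qed.

Lemma SN_bounds N u v : (1 <= N)%nat -> 0 <= u -> u <= v ->
  0 <= RInt (SN a j N) u v <= sumk (fun k => RInt (h k) u v) N.
Proof.
  intros HN Hu Hv.
  assert (Ex : forall i, (i <= N - 1)%nat -> ex_RInt (EU_integrand a N j (S i)) u v).
  { intros. apply ex_RInt_cont0; [intros; apply EU_cont | lra | lra]. }
  destruct (RInt_sum (fun k t => EU_integrand a N j (S k) t) (N - 1) u v Ex) as [_ E].
  unfold SN. rewrite E. rewrite <- (sumk_sum (fun k => RInt (h k) u v) N HN).
  assert (Hb : forall i, (i <= N - 1)%nat -> 0 <= RInt (EU_integrand a N j (S i)) u v <= RInt (h (S i)) u v).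
  { intros i Hi. split.
    - apply RInt_ge_0; auto. intros t Ht. destruct (term_bounds a j Hj Hpos N (S i) t ltac:(lia) ltac:(lra)); auto.
    - apply RInt_le; auto. apply ex_RInt_cont0; [apply h_cont'|lra|lra].
      intros t Ht. destruct (term_bounds a j Hj Hpos N (S i) t ltac:(lia) ltac:(lra)); auto. }
  split.
  - assert (Z : sum_f_R0 (fun _ : nat => 0) (N - 1) = 0).
    { clear. induction (N - 1)%nat; simpl; lra. }
    rewrite <- Z at 1. apply sum_Rle. intros; apply Hb; auto.
  - apply sum_Rle. intros; apply Hb; auto.
Qed.


Lemma D_bounded' : exists BD, forall N u v, (1 <= N)%nat -> 0 <= u -> u <= v -> RInt (SN a j N) u v <= BD.
Proof.
  destruct D_bounded as [BD HBD]. exists BD. intros N u v HN Hu Hv.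
  destruct (SN_bounds N u v HN Hu Hv) as [_ H]. eapply Rle_trans. exact H.
  eapply Rle_trans. 2: apply (HBD N). apply sumk_le. intros k Hk. apply (hk_int a j Hj Hpos k u v); [lia|lra|lra].
Qed.

Lemma EU_RInt N : (1 <= N)%nat ->
  (forall k, (1 <= k <= N)%nat -> exists v, ImpIntInf (EU_integrand a N j k) 0 v) /\
  forall e, e > 0 -> exists M, forall v, M <= v -> Rabs (RInt (SN a j N) 0 v - EU a j N) < e.
Proof.
  intros HN.
  assert (Hk : forall k, (1 <= k <= N)%nat -> exists l, ImpIntInf (EU_integrand a N j k) 0 l /\
     (forall e, e > 0 -> exists M, 0 <= M /\ forall v, M <= v -> Rabs (RInt (EU_integrand a N j k) 0 v - l) < e)).
  { intros k Hk. destruct (imp_inf_bounded (EU_integrand a N j k) (D k)) as [l [Hl [_ [_ Hc]]]].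
    - intros; apply EU_cont.
    - intros t Ht. destruct (term_bounds a j Hj Hpos N k t Hk Ht); auto.
    - intros V HV. apply Rle_trans with (RInt (h k) 0 V).
      + apply RInt_le; auto. apply ex_RInt_cont0; [intros; apply EU_cont|lra|lra].
        apply ex_RInt_cont0; [apply h_cont'|lra|lra].
        intros t Ht. destruct (term_bounds a j Hj Hpos N k t Hk ltac:(lra)); auto.
      + apply (hk_int a j Hj Hpos k 0 V); [lia|lra|lra].
    - exists l. split; auto. }
  split.
  - intros k Hk'. destruct (Hk k Hk') as [l [Hl _]]. exists l; auto.
  - intros e He.
    destruct (sum_lim (fun i v => RInt (EU_integrand a N j (S i)) 0 v)
               (fun i => imp_int_inf (EU_integrand a N j (S i)) 0) (N - 1)) with (e := e) as [M HM]; auto.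
    { intros i Hi e' He'. destruct (Hk (S i) ltac:(lia)) as [l [Hl Hc]].
      rewrite (imp_int_inf_eq _ _ _ Hl). destruct (Hc e' He') as [M [_ HM]]. exists M. auto. }
    exists (Rmax M 0). intros v Hv.
    assert (Hv0 : 0 <= v) by (eapply Rle_trans; [apply Rmax_r|exact Hv]).
    specialize (HM v ltac:(eapply Rle_trans; [apply Rmax_l|exact Hv])).
    unfold SN, EU.
    assert (Ex : forall i, (i <= N - 1)%nat -> ex_RInt (EU_integrand a N j (S i)) 0 v).
    { intros. apply ex_RInt_cont0; [intros; apply EU_cont | lra | lra]. }
    destruct (RInt_sum (fun k t => EU_integrand a N j (S k) t) (N - 1) 0 v Ex) as [_ E].
    rewrite E. exact HM.
Qed.

Lemma unif_RInt (f g : R -> R) d T eps : d <= T -> ex_RInt f d T -> ex_RInt g d T ->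
  (forall t, d <= t <= T -> Rabs (f t - g t) <= eps) -> Rabs (RInt f d T - RInt g d T) <= (T - d) * eps.
Proof.
  intros HdT Ef Eg H. rewrite <- RInt_minusR by auto. apply abs_RInt_le_const; auto.
  apply ex_RInt_minusR; auto.
Qed.

Lemma Gf_ex d T : 0 < d -> d <= T -> ex_RInt (Gf a j) d T.
Proof.
  intros Hd HdT. apply ex_RInt_contR. intros z Hz. apply (Gf_cont a j Hj Hpos Hmono Hsum).
  rewrite Rmin_left in Hz; lra.
Qed.

Lemma Gn_ex n d T : 0 < d -> d <= T -> ex_RInt (Gn a j n) d T.
Proof.
  intros Hd HdT. apply ex_RInt_contR. intros z Hz. apply (Gn_cont a j Hj Hpos Hmono).
  rewrite Rmin_left in Hz; lra.
Qed.

Lemma Gf_SN_close d T : 0 < d -> d <= T -> forall e, e > 0 -> exists N0, forall N, (N0 <= N)%nat ->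
  Rabs (RInt (Gf a j) d T - RInt (SN a j N) d T) <= e.
Proof.
  intros Hd HdT e He.
  destruct (G_unif a j Hj Hpos Hmono Hsum d T Hd HdT (e / (T - d + 1)) ltac:(apply Rdiv_lt_0_compat; lra)) as [N0 HN0].
  exists (S N0). intros N HN.
  rewrite (RInt_extR (SN a j N) (Gn a j (N - 1))).
  2: { intros x Hx. rewrite Rmin_left in Hx by lra. apply (SN_Gn a j Hj Hpos); [lia|lra]. }
  eapply Rle_trans. apply unif_RInt; auto. apply Gf_ex; auto. apply Gn_ex; auto.
  intros t Ht. left. apply HN0; auto. lia.
  apply (Rmult_le_reg_r (T - d + 1)). lra.
  replace ((T - d) * (e / (T - d + 1)) * (T - d + 1)) with ((T - d) * e) by (field; lra).
  nra.
Qed.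

Lemma Gf_bound : exists BD, forall d T, 0 < d -> d <= T -> RInt (Gf a j) d T <= BD.
Proof.
  destruct D_bounded' as [BD HBD]. exists BD. intros d T Hd HdT.
  apply Rnot_lt_le. intro Hlt.
  destruct (Gf_SN_close d T Hd HdT ((RInt (Gf a j) d T - BD) / 2) ltac:(lra)) as [N0 HN0].
  specialize (HN0 (S N0) ltac:(lia)). specialize (HBD (S N0) d T ltac:(lia) ltac:(lra) HdT).
  assert (H := Rle_abs (RInt (Gf a j) d T - RInt (SN a j (S N0)) d T)). lra.
Qed.

Lemma Gf_mono d' d T T' : 0 < d' -> d' <= d -> d <= T -> T <= T' -> RInt (Gf a j) d T <= RInt (Gf a j) d' T'.
Proof.
  intros H1 H2 H3 H4.
  rewrite <- (RInt_ChaslesR (Gf a j) d' d T') by (apply Gf_ex; lra).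
  rewrite <- (RInt_ChaslesR (Gf a j) d T T') by (apply Gf_ex; lra).
  assert (0 <= RInt (Gf a j) d' d) by (apply RInt_ge_0; [lra|apply Gf_ex; lra|intros; apply (Gf_nonneg a j Hj Hpos Hmono Hsum); lra]).
  assert (0 <= RInt (Gf a j) T T') by (apply RInt_ge_0; [lra|apply Gf_ex; lra|intros; apply (Gf_nonneg a j Hj Hpos Hmono Hsum); lra]).
  lra.
Qed.

Lemma Gf_sup : exists l, (forall d T, 0 < d -> d <= T -> RInt (Gf a j) d T <= l) /\
  (forall e, e > 0 -> exists d0 T0, 0 < d0 /\ d0 <= T0 /\ l - e < RInt (Gf a j) d0 T0).
Proof.
  destruct Gf_bound as [BD HBD].
  set (E := fun x => exists d T, 0 < d /\ d <= T /\ x = RInt (Gf a j) d T).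
  destruct (completeness E) as [l [Hub Hlub]].
  { exists BD. intros x [d [T [Hd [HdT ->]]]]. auto. }
  { exists (RInt (Gf a j) 1 1). exists 1, 1. repeat split; lra. }
  exists l. split.
  - intros d T Hd HdT. apply Hub. exists d, T. auto.
  - intros e He. apply Classical_Prop.NNPP. intro Hn.
    assert (l <= l - e); [|lra]. apply Hlub. intros x [d [T [Hd [HdT ->]]]].
    apply Rnot_lt_le. intro. apply Hn. exists d, T. auto.
Qed.

Lemma change_var u v : 0 < u -> u <= v -> v < 1 ->
  RInt (I_integrand a j) u v = RInt (Gf a j) (- ln v) (- ln u).
Proof.
  intros Hu Huv Hv.
  assert (Hlv : 0 < - ln v). { assert (ln v < 0) by (rewrite <- ln_1; apply ln_increasing; lra). lra. }
  assert (Hluv : - ln v <= - ln u). { assert (ln u <= ln v) by (apply ln_le; lra). lra. }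
  assert (Hc := @RInt_comp R_CompleteNormedModule (I_integrand a j) (fun y => exp (- y)) (fun y => - exp (- y)) (- ln u) (- ln v)).
  cbv beta in Hc. rewrite !Ropp_involutive, !exp_ln in Hc by lra.
  rewrite <- Hc.
  - rewrite (RInt_extR _ (fun y => - Gf a j y)).
    2: { intros x _. unfold Gf. unfold scal; simpl. unfold mult; simpl. ring. }
    assert (Ex : ex_RInt (Gf a j) (- ln u) (- ln v)).
    { apply (@ex_RInt_swap R_NormedModule). apply Gf_ex; lra. }
    rewrite (@RInt_opp R_CompleteNormedModule (Gf a j)) by auto.
    rewrite (@opp_RInt_swap R_CompleteNormedModule) by auto. reflexivity.
  - intros x Hx. rewrite Rmin_right in Hx by lra. rewrite Rmax_left in Hx by lra.
    apply (I_cont a j Hj Hpos Hmono Hsum). split. apply exp_pos. rewrite <- exp_0. apply exp_increasing. lra.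
  - intros x Hx. split. auto_derive. auto. ring. apply cont_of_deriv. auto_derive. auto.
Qed.

Lemma xalpha_1 : xalpha a = 1.
Proof.
  assert (Hd : forall x, diverge_set a x <-> x = 1).
  { intros x. split.
    - intros [Hx Hdiv]. destruct (Req_dec x 1) as [E|E]; auto. exfalso.
      destruct (Req_dec x 0) as [E0|E0].
      + subst. destruct (Hdiv 0) as [n Hn].
        assert (Z : sum_f_R0 (fun k => rpow 0 (a (S k))) n = 0).
        { assert (R0 : forall b, rpow 0 b = 0) by (intros; unfold rpow; destruct (Rle_dec 0 0); [reflexivity|lra]).
          clear Hn. induction n; simpl; rewrite R0; [lra| rewrite IHn; lra]. }
        lra.
      + destruct (Hsum x ltac:(lra)) as [B HB]. destruct (Hdiv B) as [n Hn].
        assert (sum_f_R0 (fun k => rpow x (a (S k))) n <= sum_f_R0 (fun k => a (S k) ^ j * rpow x (a (S k))) n).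
        { apply sum_Rle. intros i _. assert (H1 := ak_pow_ge1 a j Hpos i).
          assert (0 < rpow x (a (S i))) by (rewrite rpow_pos_eq by lra; apply exp_pos). nra. }
        specialize (HB n). lra.
    - intros ->. split. lra. intros M.
      assert (E : forall n, sum_f_R0 (fun k => rpow 1 (a (S k))) n = INR (S n)).
      { intros n. induction n; simpl sum_f_R0; rewrite rpow_pos_eq, ln_1, Rmult_0_r, exp_0 by lra.
        simpl; lra. rewrite IHn. rewrite (S_INR (S n)). ring. }
      destruct (INR_unbounded (Rmax M 0)) as [n Hn]. exists n. rewrite E.
      rewrite S_INR. assert (M <= Rmax M 0) by apply Rmax_l. lra. }
  assert (Hinf : is_inf (diverge_set a) 1).
  { split. intros x Hx. apply Hd in Hx. lra. intros m' Hm'. apply Hm'. apply Hd. reflexivity. }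
  unfold xalpha.
  assert (H2 := epsilon_spec (inhabits 0) (is_inf (diverge_set a)) (ex_intro _ 1 Hinf)).
  set (m := epsilon (inhabits 0) (is_inf (diverge_set a))) in *.
  destruct H2 as [H1 H3]. destruct Hinf as [H4 H5].
  apply Rle_antisym. apply H1. apply Hd; reflexivity. apply H3. auto.
Qed.


Lemma RInt_lower_mono (f : R -> R) T1 T v : (forall t, 0 <= t -> continuous f t) -> (forall t, 0 <= t -> 0 <= f t) ->
  0 <= T1 -> T1 <= T -> T <= v -> RInt f T v <= RInt f T1 v.
Proof.
  intros Hc Hp H1 H2 H3. rewrite <- (RInt_ChaslesR f T1 T v) by (apply ex_RInt_cont0; auto; lra).
  assert (0 <= RInt f T1 T) by (apply RInt_ge_0; [lra| apply ex_RInt_cont0; auto; lra | intros; apply Hp; lra]).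
  lra.
Qed.

Theorem generic_limit : LimitIsI a a j.
Proof.
  split.
  { intros N k HN Hk. apply (proj1 (EU_RInt N ltac:(lia))). auto. }
  destruct Gf_sup as [l [Hle Happ]]. exists l. split.
  - rewrite xalpha_1. split.
    + intros u v Hu Huv Hv. constructor. apply ex_RInt_Reals_0. apply ex_RInt_contR. intros z Hz.
      rewrite Rmin_left in Hz by lra. rewrite Rmax_right in Hz by lra.
      apply (I_cont a j Hj Hpos Hmono Hsum). lra.
    + intros e He. destruct (Happ e He) as [d0 [T0 [Hd0 [HdT0 Hl0]]]].
      assert (E1 : 0 < exp (- T0)) by apply exp_pos.
      assert (E2 : exp (- d0) < 1) by (rewrite <- exp_0; apply exp_increasing; lra).
      exists (Rmin (exp (- T0)) (1 - exp (- d0))). split. apply Rmin_glb_lt; lra.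
      intros u v pr Hu1 Hu2 Hv1 Hv2 Huv.
      assert (Hm1 := Rmin_l (exp (- T0)) (1 - exp (- d0))). assert (Hm2 := Rmin_r (exp (- T0)) (1 - exp (- d0))).
      rewrite <- RInt_Reals. rewrite change_var by lra.
      assert (HT : T0 <= - ln u). { assert (ln u <= ln (exp (- T0))) by (apply ln_le; lra). rewrite ln_exp in H. lra. }
      assert (Hd : - ln v <= d0). { assert (ln (exp (- d0)) <= ln v) by (apply ln_le; [apply exp_pos|lra]). rewrite ln_exp in H. lra. }
      assert (Hv0 : 0 < - ln v). { assert (ln v < 0) by (rewrite <- ln_1; apply ln_increasing; lra). lra. }
      assert (H1 := Gf_mono (- ln v) d0 T0 (- ln u) Hv0 Hd HdT0 HT).
      assert (H2 := Hle (- ln v) (- ln u) Hv0 ltac:(lra)).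
      apply Rabs_def1; lra.
  - intros e He. set (e' := e / 8).
    assert (He' : 0 < e') by (unfold e'; lra).
    destruct (D_tail e' He') as [K [HK1 HK]].
    destruct (h_small0 K e' He') as [d1 [Hd1 Hsd1]].
    destruct (h_small_inf K e' He') as [T1 [HT1 HsT1]].
    destruct (Happ e' He') as [d0 [T0 [Hd0 [HdT0 Hl0]]]].
    set (d := Rmin d0 d1). set (T := Rmax T0 T1).
    assert (Hdd0 : d <= d0) by apply Rmin_l. assert (Hdd1 : d <= d1) by apply Rmin_r.
    assert (HTT0 : T0 <= T) by apply Rmax_l. assert (HTT1 : T1 <= T) by apply Rmax_r.
    assert (Hd : 0 < d) by (apply Rmin_glb_lt; lra).
    assert (HdT : d <= T) by lra.
    assert (HGf1 := Gf_mono d d0 T0 T Hd Hdd0 HdT0 HTT0).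
    assert (HGf2 := Hle d T Hd HdT).
    destruct (Gf_SN_close d T Hd HdT e' He') as [N0 HN0].
    exists (max (max N0 K) 2). intros N HN. unfold R_dist.
    destruct (EU_RInt N ltac:(lia)) as [_ HEU].
    destruct (HEU e' He') as [M HM].
    set (v := Rmax M T). assert (HvM : M <= v) by apply Rmax_l. assert (HvT : T <= v) by apply Rmax_r.
    specialize (HM v HvM).
    assert (Hc : forall t, 0 <= t -> continuous (SN a j N) t) by (intros; apply (SN_cont a j)).
    rewrite <- (RInt_ChaslesR (SN a j N) 0 d v) in HM by (apply ex_RInt_cont0; auto; lra).
    rewrite <- (RInt_ChaslesR (SN a j N) d T v) in HM by (apply ex_RInt_cont0; auto; lra).
    assert (HC := HN0 N ltac:(lia)).
    assert (HKN : (K <= N)%nat) by lia.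
    assert (HA : 0 <= RInt (SN a j N) 0 d <= 2 * e').
    { destruct (SN_bounds N 0 d ltac:(lia) ltac:(lra) ltac:(lra)) as [A1 A2]. split; auto.
      assert (B1 : sumk (fun k => RInt (h k) 0 d) K <= sumk (fun k => RInt (h k) 0 d1) K).
      { apply sumk_le. intros k Hk. apply RInt_mono_upper; try lra. apply h_cont'. apply h_nonneg'; lia. }
      assert (B2 : sumk (fun k => RInt (h k) 0 d) N - sumk (fun k => RInt (h k) 0 d) K <= sumk D N - sumk D K).
      { apply sumk_split_le; auto. intros k Hk. apply (hk_int a j Hj Hpos k 0 d); [lia|lra|lra]. }
      specialize (HK N HKN). lra. }
    assert (HB : 0 <= RInt (SN a j N) T v <= 2 * e').
    { destruct (SN_bounds N T v ltac:(lia) ltac:(lra) ltac:(lra)) as [A1 A2]. split; auto.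
      assert (B1 : sumk (fun k => RInt (h k) T v) K <= sumk (fun k => RInt (h k) T1 v) K).
      { apply sumk_le. intros k Hk. apply RInt_lower_mono; try lra. apply h_cont'. apply h_nonneg'; lia. }
      assert (B2 : sumk (fun k => RInt (h k) T v) N - sumk (fun k => RInt (h k) T v) K <= sumk D N - sumk D K).
      { apply sumk_split_le; auto. intros k Hk. apply (hk_int a j Hj Hpos k T v); [lia|lra|lra]. }
      specialize (HK N HKN). specialize (HsT1 v ltac:(lra)). lra. }
    apply Rabs_def2 in HM.
    assert (HC1 := Rle_abs (RInt (Gf a j) d T - RInt (SN a j N) d T)).
    assert (HC2 := Rle_abs (- (RInt (Gf a j) d T - RInt (SN a j N) d T))). rewrite Rabs_Ropp in HC2.
    apply Rabs_def1; unfold e' in *; lra.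
Qed.

End Main.

Lemma exp_pow_nat n z : exp (INR n * z) = exp z ^ n.
Proof.
  induction n. simpl. rewrite Rmult_0_l. apply exp_0.
  rewrite S_INR, Rmult_plus_distr_r, Rmult_1_l, exp_plus, IHn. simpl. ring.
Qed.

Lemma pow_le_exp n y : (1 <= n)%nat -> 0 <= y -> y ^ n <= INR n ^ n * exp y.
Proof.
  intros Hn Hy. assert (HnR : 0 < INR n) by (apply lt_0_INR; lia).
  replace y with (INR n * (y / INR n)) at 2 by (field; lra).
  rewrite exp_pow_nat. rewrite <- Rpow_mult_distr.
  apply pow_incr. split. lra.
  assert (H := exp_ineq1_le (y / INR n)).
  assert (y <= INR n * (1 + y / INR n)). { rewrite Rmult_plus_distr_l. replace (INR n * (y / INR n)) with y by (field; lra). lra. }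
  assert (INR n * (1 + y / INR n) <= INR n * exp (y / INR n)) by (apply Rmult_le_compat_l; lra). lra.
Qed.

Lemma pow_exp_bound n y : (1 <= n)%nat -> 0 <= y -> y ^ n * exp (- y) <= INR n ^ n.
Proof.
  intros Hn Hy. assert (H := pow_le_exp n y Hn Hy).
  assert (E : exp y * exp (- y) = 1) by (rewrite <- exp_plus; replace (y + - y) with 0 by ring; apply exp_0).
  assert (0 < exp (- y)) by apply exp_pos.
  apply Rmult_le_compat_r with (r := exp (- y)) in H; [|lra]. rewrite Rmult_assoc, E in H. lra.
Qed.

Lemma Hsum_of_linear (a : nat -> R) j c : (1 <= j)%nat -> 0 < c -> (forall k, c * INR (S k) <= a (S k)) ->
  (forall k, 1 <= a (S k)) ->
  forall x, 0 < x < 1 -> exists B, forall n, sum_f_R0 (fun k => a (S k) ^ j * rpow x (a (S k))) n <= B.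
Proof.
  intros Hj Hc Hlin Hpos x Hx.
  set (s := - ln x). assert (Hs : 0 < s). { assert (ln x < 0) by (rewrite <- ln_1; apply ln_increasing; lra). unfold s; lra. }
  set (rho := exp (- (s * c / 2))).
  assert (Hrho : 0 < rho < 1). { split. apply exp_pos. rewrite <- exp_0. apply exp_increasing.
    assert (0 < s * c / 2) by (apply Rdiv_lt_0_compat; [nra|lra]). lra. }
  set (M := (2 / s) ^ j * INR j ^ j).
  assert (HM : 0 <= M) by (unfold M; apply Rmult_le_pos; apply pow_le; [apply Rlt_le, Rdiv_lt_0_compat; lra| apply pos_INR]).
  assert (Hterm : forall k, a (S k) ^ j * rpow x (a (S k)) <= M * rho ^ (S k)).
  { intros k. rewrite rpow_pos_eq by lra. fold s. replace (a (S k) * ln x) with (- (s * a (S k))) by (unfold s; ring).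
    set (A := a (S k)). assert (HA : 1 <= A) by apply Hpos.
    assert (E1 : exp (- (s * A)) = exp (- (s * A / 2)) * exp (- (s * A / 2))) by (rewrite <- exp_plus; f_equal; field).
    assert (H1 : exp (- (s * A / 2)) <= rho ^ (S k)).
    { unfold rho. rewrite <- exp_pow_nat. apply exp_le_mono. specialize (Hlin k). fold A in Hlin.
      replace (- (s * A / 2)) with (- (s / 2) * A) by field.
      replace (INR (S k) * - (s * c / 2)) with (- (s / 2) * (c * INR (S k))) by field.
      apply Rmult_le_compat_neg_l; lra. }
    assert (H2 : A ^ j * exp (- (s * A / 2)) <= M).
    { unfold M. set (y := s * A / 2). assert (Hy : 0 <= y) by (unfold y; nra).
      assert (EA : A = (2 / s) * y) by (unfold y; field; lra). rewrite EA at 1. rewrite Rpow_mult_distr.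
      assert (Hyj := pow_exp_bound j y Hj Hy).
      assert (0 <= (2 / s) ^ j) by (apply pow_le; apply Rlt_le, Rdiv_lt_0_compat; lra).
      rewrite Rmult_assoc. apply Rmult_le_compat_l; auto. }
    rewrite E1. assert (0 < exp (- (s * A / 2))) by apply exp_pos.
    assert (0 <= A ^ j) by (apply pow_le; lra).
    replace (A ^ j * (exp (- (s * A / 2)) * exp (- (s * A / 2)))) with ((A ^ j * exp (- (s * A / 2))) * exp (- (s * A / 2))) by ring.
    apply Rmult_le_compat; auto. apply Rmult_le_pos; lra. lra. }
  exists (M / (1 - rho)). intros n.
  apply Rle_trans with (sum_f_R0 (fun k => M * rho ^ (S k)) n). apply sum_Rle. intros; apply Hterm.
  assert (E : sum_f_R0 (fun k => M * rho ^ (S k)) n = M * rho * sum_f_R0 (fun k => rho ^ k) n).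
  { clear. induction n; cbn [sum_f_R0]. simpl; ring. rewrite IHn. simpl; ring. }
  rewrite E. assert (G := GP_finite rho n).
  assert (Hsum : sum_f_R0 (fun k => rho ^ k) n = (1 - rho ^ (n + 1)) / (1 - rho)).
  { apply (Rmult_eq_reg_r (rho - 1)). rewrite G. field. lra. lra. }
  rewrite Hsum. assert (0 < rho ^ (n + 1)) by (apply pow_lt; lra).
  unfold Rdiv. rewrite <- Rmult_assoc.
  apply Rmult_le_compat_r. left; apply Rinv_0_lt_compat; lra.
  assert (M * rho * (1 - rho ^ (n + 1)) <= M * 1 * 1); [|lra].
  assert (rho ^ (n + 1) <= 1) by (rewrite <- (pow1 (n + 1)); apply pow_incr; lra).
  apply Rmult_le_compat. apply Rmult_le_pos; lra. lra. apply Rmult_le_compat_l; lra. lra.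
Qed.

Lemma fact_ge_S k : (S k <= fact (S k))%nat.
Proof. simpl. assert (1 <= fact k)%nat by apply lt_O_fact. nia. Qed.

Theorem part_b j : (2 <= j)%nat -> LimitIsI (fun k => INR (fact k)) (fun k => INR (fact k)) j.
Proof.
  intros Hj.
  assert (Hpos : forall k, 1 <= INR (fact (S k))) by (intros; apply (le_INR 1); apply lt_O_fact).
  apply generic_limit; auto.
  - intros k. apply le_INR. apply fact_le. lia.
  - intros x Hx. apply (Hsum_of_linear (fun k => INR (fact k)) j 1); try lra; try lia; auto.
    intros k. rewrite Rmult_1_l. apply le_INR. apply fact_ge_S.
  - exists j. split. lia. intros k Hk.
    assert (E : INR (fact k) / INR (fact (S k)) = / INR (S k)).
    { rewrite fact_simpl, mult_INR. field. split; apply not_0_INR; try apply fact_neq_0; lia. }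
    rewrite E. rewrite pow_inv.
    assert (Hn : (2 * (j + k - 1) <= (S k) ^ k)%nat).
    { assert (H1 : (S k ^ 2 <= S k ^ k)%nat) by (apply Nat.pow_le_mono_r; lia). simpl in H1. nia. }
    apply le_INR in Hn. rewrite mult_INR, pow_INR in Hn. simpl (INR 2) in Hn.
    assert (0 < INR (S k) ^ k) by (apply pow_lt; apply lt_0_INR; lia).
    apply (Rmult_le_reg_r (INR (S k) ^ k)). auto.
    rewrite Rmult_assoc, Rinv_l by lra. lra.
Qed.

Theorem part_alpha p j : 0 < p -> (2 <= j)%nat -> LimitIsI (fun k => exp (p * INR k)) (fun k => exp (p * INR k)) j.
Proof.
  intros Hp Hj.
  assert (Hpos : forall k, 1 <= exp (p * INR (S k))).
  { intros k. assert (H := exp_ineq1_le (p * INR (S k))). assert (0 <= p * INR (S k)) by (apply Rmult_le_pos; [lra|apply pos_INR]). lra. }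
  apply generic_limit; auto.
  - intros k. apply exp_le_mono. apply Rmult_le_compat_l. lra. apply le_INR; lia.
  - intros x Hx. apply (Hsum_of_linear (fun k => exp (p * INR k)) j p); try lra; try lia; auto.
    intros k. assert (H := exp_ineq1_le (p * INR (S k))). lra.
  - destruct (INR_unbounded (16 / (p * p))) as [n0 Hn0].
    exists (max (max j n0) 1). split. lia. intros k Hk.
    assert (E : exp (p * INR k) / exp (p * INR (S k)) = exp (- p)).
    { unfold Rdiv. rewrite <- exp_Ropp, <- exp_plus. f_equal. rewrite S_INR. ring. }
    rewrite E. rewrite <- exp_pow_nat.
    set (y := p * INR k).
    assert (Hk1 : INR n0 <= INR k) by (apply le_INR; lia).
    assert (Hkj : INR j <= INR k) by (apply le_INR; lia).
    assert (Hy : 0 <= y) by (unfold y; apply Rmult_le_pos; [lra|apply pos_INR]).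
    assert (H2 := pow_le_exp 2 y ltac:(lia) Hy). simpl in H2.
    assert (Hjk : INR (j + k - 1) <= INR j + INR k) by (rewrite <- plus_INR; apply le_INR; lia).
    assert (Hpk : 16 <= p * p * INR k).
    { apply (Rmult_lt_compat_l (p * p)) in Hn0; [|nra]. unfold Rdiv in Hn0.
      rewrite <- Rmult_assoc, (Rmult_comm (p * p) 16), Rmult_assoc, Rinv_r in Hn0 by nra. nra. }
    assert (Hey : 2 * INR (j + k - 1) <= exp y).
    { assert (y * y <= 4 * exp y) by lra. unfold y in *. nra. }
    replace (INR k * - p) with (- y) by (unfold y; ring).
    assert (0 < exp (- y)) by apply exp_pos.
    assert (E2 : exp y * exp (- y) = 1) by (rewrite <- exp_plus; replace (y + - y) with 0 by ring; apply exp_0).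
    assert (2 * INR (j + k - 1) * exp (- y) <= 1) by nra. lra.
Qed.

Lemma prod_shift (g : nat -> R) n : prod_f_R0 g (S n) = g 0%nat * prod_f_R0 (fun i => g (S i)) n.
Proof. induction n. simpl. ring. cbn [prod_f_R0] in *. rewrite IHn. ring. Qed.

Lemma prod_rev (f : nat -> R) n : prod_f_R0 f n = prod_f_R0 (fun i => f (n - i)%nat) n.
Proof.
  induction n. simpl. reflexivity.
  rewrite (prod_shift (fun i => f (S n - i)%nat)). cbn [prod_f_R0]. rewrite IHn. rewrite Nat.sub_0_r.
  rewrite Rmult_comm. reflexivity.
Qed.

Lemma sum_shift (g : nat -> R) n : sum_f_R0 g (S n) = g 0%nat + sum_f_R0 (fun i => g (S i)) n.
Proof. induction n. simpl. ring. cbn [sum_f_R0] in *. rewrite IHn. ring. Qed.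

Lemma sum_rev (f : nat -> R) n : sum_f_R0 f n = sum_f_R0 (fun i => f (n - i)%nat) n.
Proof.
  induction n. simpl. reflexivity.
  rewrite (sum_shift (fun i => f (S n - i)%nat)). cbn [sum_f_R0]. rewrite IHn. rewrite Nat.sub_0_r.
  rewrite Rplus_comm. reflexivity.
Qed.

Lemma ImpIntInf_scale (g : R -> R) v lam : 0 < lam -> (forall t, 0 <= t -> continuous g t) ->
  ImpIntInf g 0 v -> ImpIntInf (fun t => lam * g (lam * t)) 0 v.
Proof.
  intros Hl Hc [_ Hg]. apply ImpIntInf_of_RInt.
  - intros t Ht. apply (cR_mult (fun _ => lam) (fun t => g (lam * t))). apply cR_const.
    apply (cR_comp (fun t => lam * t) g). apply cR_mult. apply cR_const. apply cR_id. apply Hc. nra.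
  - intros e He. destruct (Hg e He) as [M HM]. exists (Rmax M 0 / lam). intros w Hw Hw0.
    assert (HlamW : Rmax M 0 <= lam * w).
    { apply (Rmult_le_compat_l lam) in Hw; [|lra]. unfold Rdiv in Hw.
      rewrite <- Rmult_assoc, (Rmult_comm lam (Rmax M 0)), Rmult_assoc, Rinv_r, Rmult_1_r in Hw by lra. lra. }
    assert (E : RInt (fun t => lam * g (lam * t)) 0 w = RInt g 0 (lam * w)).
    { assert (H := @RInt_comp_lin R_CompleteNormedModule g lam 0 0 w).
      rewrite Rmult_0_r, !Rplus_0_r in H.
      rewrite <- H. apply RInt_extR. intros x _. unfold scal; simpl. unfold mult; simpl. rewrite Rplus_0_r. reflexivity.
      apply ex_RInt_cont0; auto; nra. }
    rewrite E.
    assert (Ex : ex_RInt g 0 (lam * w)) by (apply ex_RInt_cont0; auto; nra).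
    assert (pr := ex_RInt_Reals_0 _ _ _ Ex).
    rewrite (RInt_Reals g 0 (lam * w) pr). apply HM; [eapply Rle_trans; [apply Rmax_l| exact HlamW] | nra].
Qed.

Section Transfer.
Variable p : R.
Hypothesis Hp : 0 < p.
Variable j : nat.
Hypothesis Hj : (2 <= j)%nat.

Let c := fun k => exp (- (p * INR k)).
Let al := fun k => exp (p * INR k).

Lemma EU_int_scale N k : (1 <= k <= N)%nat ->
  EU_integrand c N j k = fun t => exp (- (p * INR (S N))) * EU_integrand al N j (S N - k) (exp (- (p * INR (S N))) * t).
Proof.
  intros Hk. apply functional_extensionality. intros t.
  set (lam := exp (- (p * INR (S N)))).
  assert (Hc : forall i, (1 <= i <= N)%nat -> c i = lam * al (S N - i)%nat).
  { intros i Hi. unfold c, al, lam. rewrite <- exp_plus. f_equal. rewrite minus_INR by lia. ring. }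
  unfold EU_integrand.
  rewrite (Hc k Hk).
  rewrite (prod_rev (fun i => if Nat.eqb (S i) k then 1 else 1 - exp (- (c (S i) * t)))).
  rewrite (prod_ext (fun i => (fun i => if Nat.eqb (S i) k then 1 else 1 - exp (- (c (S i) * t))) (N - 1 - i)%nat)
             (fun i => if Nat.eqb (S i) (S N - k) then 1 else 1 - exp (- (al (S i) * (lam * t))))).
  - replace ((lam * al (S N - k)%nat) * t) with (al (S N - k)%nat * (lam * t)) by ring.
    rewrite !Rpow_mult_distr. field. apply not_0_INR, fact_neq_0.
  - intros i Hi. cbv beta.
    destruct (Nat.eqb_spec (S (N - 1 - i)) k); destruct (Nat.eqb_spec (S i) (S N - k)); try lia. reflexivity.
    rewrite (Hc (S (N - 1 - i)) ltac:(lia)). replace (S N - S (N - 1 - i))%nat with (S i) by lia.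
    f_equal. f_equal. ring.
Qed.

Lemma EU_transfer N : (2 <= N)%nat ->
  (forall k, (1 <= k <= N)%nat -> exists v, ImpIntInf (EU_integrand c N j k) 0 v) /\ EU c j N = EU al j N.
Proof.
  intros HN.
  destruct (part_alpha p j Hp Hj) as [H1 _]. fold al in H1.
  assert (Hl : 0 < exp (- (p * INR (S N)))) by apply exp_pos.
  assert (Hk : forall k, (1 <= k <= N)%nat -> exists v, ImpIntInf (EU_integrand c N j k) 0 v /\
             ImpIntInf (EU_integrand al N j (S N - k)) 0 v).
  { intros k Hk. destruct (H1 N (S N - k)%nat HN ltac:(lia)) as [v Hv]. exists v. split; auto.
    rewrite (EU_int_scale N k Hk). apply ImpIntInf_scale; auto. intros; apply EU_cont. }
  split.
  - intros k Hk'. destruct (Hk k Hk') as [v [Hv _]]. eauto.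
  - unfold EU. rewrite (sum_rev (fun k => imp_int_inf (EU_integrand al N j (S k)) 0)).
    apply sum_ext. intros i Hi. cbv beta.
    destruct (Hk (S i) ltac:(lia)) as [v [Hv1 Hv2]].
    rewrite (imp_int_inf_eq _ _ _ Hv1).
    replace (S (N - 1 - i)) with (S N - S i)%nat by lia.
    rewrite (imp_int_inf_eq _ _ _ Hv2). reflexivity.
Qed.

Theorem part_c : LimitIsI c al j.
Proof.
  destruct (part_alpha p j Hp Hj) as [_ [l [Hl1 Hl2]]]. fold al in Hl1, Hl2.
  split.
  - intros N k HN Hk. apply (proj1 (EU_transfer N HN)); auto.
  - exists l. split; auto. intros e He. destruct (Hl2 e He) as [N0 HN0]. exists (max N0 2).
    intros N HN. rewrite (proj2 (EU_transfer N ltac:(lia))). apply HN0. lia.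
Qed.

End Transfer.

Lemma ln_le_xm1 y : 0 < y -> ln y <= y - 1.
Proof. intros Hy. assert (H := exp_ineq1_le (ln y)). rewrite exp_ln in H; lra. Qed.

Lemma ln1p_lower h : 0 < h -> h / (1 + h) <= ln (1 + h).
Proof.
  intros Hh. assert (H := ln_le_xm1 (/ (1 + h)) ltac:(apply Rinv_0_lt_compat; lra)).
  rewrite ln_Rinv in H by lra.
  assert (E : / (1 + h) - 1 = - (h / (1 + h))) by (field; lra). lra.
Qed.

Lemma Rpower_1p_lower h q : 0 < h -> 0 < q -> 1 + q * (h / (1 + h)) <= Rpower (1 + h) q.
Proof.
  intros Hh Hq. unfold Rpower. assert (H := exp_ineq1_le (q * ln (1 + h))).
  assert (H2 := ln1p_lower h Hh). assert (q * (h / (1 + h)) <= q * ln (1 + h)) by (apply Rmult_le_compat_l; lra). lra.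
Qed.

Lemma exists_m q c : 0 < q -> exists m, (1 <= m)%nat /\ c <= INR m * q.
Proof.
  intros Hq. destruct (INR_unbounded (c / q)) as [n Hn]. exists (S n). split. lia.
  rewrite S_INR. apply (Rmult_lt_compat_r q) in Hn; auto. unfold Rdiv in Hn.
  rewrite Rmult_assoc, Rinv_l, Rmult_1_r in Hn by lra. nra.
Qed.

Lemma Rpower_pow_ge x q m r : 1 <= x -> r <= INR m * q -> 0 < q -> Rpower (Rpower x q) (INR m) >= Rpower x r.
Proof.
  intros Hx Hr Hq. rewrite Rpower_mult. apply Rle_ge. apply Rle_Rpower. auto. lra.
Qed.

Section PartA.
Variable p q : R.
Hypothesis Hp : 0 < p.
Hypothesis Hq : 0 < q.
Variable j : nat.
Hypothesis Hj : (2 <= j)%nat.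

Let P k := Rpower (INR k) q.
Let a k := exp (p * P k).

Lemma P_pos k : (1 <= k)%nat -> 0 < P k.
Proof. intros. unfold P, Rpower. apply exp_pos. Qed.

Lemma P_pow k m : (1 <= k)%nat -> P k ^ m = Rpower (INR k) (INR m * q).
Proof.
  intros Hk. unfold P. rewrite <- Rpower_pow by (unfold Rpower; apply exp_pos).
  rewrite Rpower_mult. f_equal. ring.
Qed.

Lemma A_pos k : 1 <= a (S k).
Proof.
  unfold a. assert (H := P_pos (S k) ltac:(lia)). assert (H2 := exp_ineq1_le (p * P (S k))). nra.
Qed.

Lemma A_mono k : a (S k) <= a (S (S k)).
Proof.
  unfold a, P. apply exp_le_mono. apply Rmult_le_compat_l. lra. apply Rle_Rpower_l. lra.
  split. apply lt_0_INR; lia. apply le_INR; lia.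
Qed.

Lemma A_linear : exists c, 0 < c /\ forall k, c * INR (S k) <= a (S k).
Proof.
  destruct (exists_m q 1 Hq) as [m [Hm Hmq]].
  assert (HmR : 0 < INR m) by (apply lt_0_INR; lia).
  exists (p ^ m / INR m ^ m). split. apply Rdiv_lt_0_compat; apply pow_lt; lra.
  intros k. unfold a. set (y := p * P (S k)).
  assert (Hy : 0 <= y) by (unfold y; assert (H := P_pos (S k) ltac:(lia)); nra).
  assert (H1 := pow_le_exp m y Hm Hy).
  assert (H2 : y ^ m = p ^ m * Rpower (INR (S k)) (INR m * q)) by (unfold y; rewrite Rpow_mult_distr, P_pow by lia; reflexivity).
  assert (H3 : INR (S k) <= Rpower (INR (S k)) (INR m * q)).
  { rewrite <- (Rpower_1 (INR (S k))) at 1 by (apply lt_0_INR; lia). apply Rle_Rpower.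
    apply (le_INR 1); lia. lra. }
  assert (Hpm : 0 < p ^ m) by (apply pow_lt; lra). assert (Hmm : 0 < INR m ^ m) by (apply pow_lt; lra).
  apply (Rmult_le_reg_l (INR m ^ m)). auto.
  replace (INR m ^ m * (p ^ m / INR m ^ m * INR (S k))) with (p ^ m * INR (S k)) by (field; lra).
  assert (p ^ m * INR (S k) <= y ^ m) by (rewrite H2; apply Rmult_le_compat_l; lra). lra.
Qed.

Lemma P_step k : (1 <= k)%nat -> P k * (1 + q * (1 / INR (S k))) <= P (S k).
Proof.
  intros Hk. assert (HkR : 0 < INR k) by (apply lt_0_INR; lia).
  unfold P. replace (INR (S k)) with (INR k * (1 + 1 / INR k)) at 2 by (rewrite S_INR; field; lra).
  rewrite <- Rpower_mult_distr by (first [lra | apply Rplus_lt_0_compat; [lra| apply Rdiv_lt_0_compat; lra]]).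
  apply Rmult_le_compat_l. unfold Rpower; left; apply exp_pos.
  assert (H := Rpower_1p_lower (1 / INR k) q ltac:(apply Rdiv_lt_0_compat; lra) Hq).
  replace (1 / INR k / (1 + 1 / INR k)) with (1 / INR (S k)) in H by (rewrite S_INR; field; lra). lra.
Qed.

Lemma A_ratio : exists K0, (1 <= K0)%nat /\ forall k, (K0 <= k)%nat -> INR (j + k - 1) * (a k / a (S k)) ^ k <= 1 / 2.
Proof.
  destruct (exists_m q 2 Hq) as [m [Hm Hmq]].
  assert (HmR : 0 < INR m) by (apply lt_0_INR; lia).
  set (C := (p * q / 2) ^ m / INR m ^ m).
  assert (HC : 0 < C) by (apply Rdiv_lt_0_compat; apply pow_lt; [apply Rdiv_lt_0_compat; nra|lra]).
  destruct (INR_unbounded (4 / C)) as [n0 Hn0].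
  exists (max (max j n0) 1). split. lia. intros k Hk.
  assert (HkR : 0 < INR k) by (apply lt_0_INR; lia).
  assert (Hk1 : 1 <= INR k) by (apply (le_INR 1); lia).
  assert (HPk := P_pos k ltac:(lia)).
  set (y := p * q * P k / 2).
  assert (Hy : 0 <= y) by (unfold y; apply Rmult_le_pos; [|lra]; apply Rmult_le_pos; nra).
  assert (Hr : (a k / a (S k)) ^ k <= exp (- y)).
  { unfold a. unfold Rdiv. rewrite <- exp_Ropp, <- exp_plus. rewrite <- exp_pow_nat. apply exp_le_mono.
    assert (HS := P_step k ltac:(lia)).
    assert (HSk : INR k / INR (S k) >= 1 / 2).
    { rewrite S_INR. apply Rle_ge. apply (Rmult_le_reg_r (INR k + 1)). lra.
      replace (INR k / (INR k + 1) * (INR k + 1)) with (INR k) by (field; lra). lra. }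
    assert (E : INR k * (p * P k + - (p * P (S k))) = - (p * (INR k * (P (S k) - P k)))) by ring.
    rewrite E.
    assert (INR k * (P (S k) - P k) >= q * P k / 2).
    { assert (INR k * (P (S k) - P k) >= INR k * (P k * (q * (1 / INR (S k))))) by (apply Rle_ge, Rmult_le_compat_l; lra).
      assert (INR k * (P k * (q * (1 / INR (S k)))) = q * P k * (INR k / INR (S k))) by (field; apply not_0_INR; lia).
      assert (q * P k * (INR k / INR (S k)) >= q * P k * (1 / 2)) by (apply Rle_ge, Rmult_le_compat_l; [nra|lra]).
      lra. }
    unfold y. nra. }
  assert (Hey : C * (INR k * INR k) <= exp y).
  { assert (H1 := pow_le_exp m y Hm Hy).
    assert (H2 : y ^ m = (p * q / 2) ^ m * Rpower (INR k) (INR m * q)).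
    { unfold y. replace (p * q * P k / 2) with ((p * q / 2) * P k) by field. rewrite Rpow_mult_distr, P_pow by lia. reflexivity. }
    assert (H3 : INR k * INR k <= Rpower (INR k) (INR m * q)).
    { replace (INR k * INR k) with (Rpower (INR k) 2).
      apply Rle_Rpower; lra. replace 2 with (INR 2) by (simpl; lra). rewrite Rpower_pow by lra. simpl; ring. }
    assert (Hpm : 0 < (p * q / 2) ^ m) by (apply pow_lt; apply Rdiv_lt_0_compat; nra).
    assert (Hmm : 0 < INR m ^ m) by (apply pow_lt; lra).
    apply (Rmult_le_reg_l (INR m ^ m)). auto. unfold C.
    replace (INR m ^ m * ((p * q / 2) ^ m / INR m ^ m * (INR k * INR k))) with ((p * q / 2) ^ m * (INR k * INR k)) by (field; lra).
    assert ((p * q / 2) ^ m * (INR k * INR k) <= y ^ m) by (rewrite H2; apply Rmult_le_compat_l; lra). lra. }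
  assert (Hkn : INR n0 <= INR k) by (apply le_INR; lia).
  assert (Hkj : INR j <= INR k) by (apply le_INR; lia).
  assert (Hjk : INR (j + k - 1) <= INR j + INR k) by (rewrite <- plus_INR; apply le_INR; lia).
  assert (HCk : 4 <= C * INR k).
  { apply (Rmult_lt_compat_l C) in Hn0; auto. unfold Rdiv in Hn0.
    rewrite <- Rmult_assoc, (Rmult_comm C 4), Rmult_assoc, Rinv_r, Rmult_1_r in Hn0 by lra. nra. }
  assert (H2k : 2 * INR (j + k - 1) <= exp y) by nra.
  assert (0 < exp (- y)) by apply exp_pos.
  assert (E2 : exp y * exp (- y) = 1) by (rewrite <- exp_plus; replace (y + - y) with 0 by ring; apply exp_0).
  assert (0 <= INR (j + k - 1)) by apply pos_INR.
  assert (INR (j + k - 1) * (a k / a (S k)) ^ k <= INR (j + k - 1) * exp (- y)) by (apply Rmult_le_compat_l; auto).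
  nra.
Qed.

Theorem part_a : LimitIsI a a j.
Proof.
  destruct A_linear as [c [Hc Hl]].
  apply generic_limit; auto.
  - apply A_pos.
  - apply A_mono.
  - intros x Hx. apply (Hsum_of_linear a j c); auto. lia. apply A_pos.
  - apply A_ratio.
Qed.

End PartA.


Theorem mainTheorem13 :
  (* (a) a_k = e^{p k^q} *)
  (forall p q : R, 0 < p -> 0 < q -> forall j : nat, (2 <= j)%nat ->
     LimitIsI (fun k => exp (p * Rpower (INR k) q))
              (fun k => exp (p * Rpower (INR k) q)) j) /\
  (* (b) a_k = k! *)
  (forall j : nat, (2 <= j)%nat ->
     LimitIsI (fun k => INR (fact k)) (fun k => INR (fact k)) j) /\
  (* (c) c_k = b_k = e^{-pk}, alpha = {e^{pk}} *)
  (forall p : R, 0 < p -> forall j : nat, (2 <= j)%nat ->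
     LimitIsI (fun k => exp (- (p * INR k))) (fun k => exp (p * INR k)) j).
Proof.
  split; [|split].
  - intros p q Hp Hq j Hj. exact (part_a p q Hp Hq j Hj).
  - exact part_b.
  - intros p Hp j Hj. exact (part_c p Hp j Hj).
Qed.
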